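(* Let $D\subseteq\mathbb C^{n-1}\times\mathbb R$ be a domain and $u:D\times(0,+\infty)\to\mathbb R$, $u=u(x,y',t)$, continuous. Then the function $v(z,t)=y_n-u(x,y',t)$ is a weak solution of $v_t=\mathcal H(v)$ in $(D\times i\mathbb R)\times(0,+\infty)$ if and only if $u$ is a weak solution of $u_t=\mathcal H_0(u)$ in $D\times(0,+\infty)$.
   Context: Coordinates $z_\alpha=x_\alpha+iy_\alpha$ on $\mathbb C^n$, $n\ge2$; $x=(x_1,\dots,x_n)$, $y'=(y_1,\dots,y_{n-1})$, and $\mathbb C^{n-1}\times\mathbb R$ has coordinates $(x,y')$, so $D\times i\mathbb R=\{z:(x,y')\in D\}$. For $v(z,t)$ write $v_\alpha=\partial v/\partial z_\alpha$, $v_{\bar\beta}=\partial v/\partial\bar z_\beta$, $v_{\alpha\bar\beta}=\partial^2v/\partial z_\alpha\partial\bar z_\beta$, $|\partial v|^2=\sum_\alpha|v_\alpha|^2$, and for $C^2$ $v$ with $\partial v\ne0$, $\mathcal H(v)=\sum_{\alpha,\beta}(\delta_{\alpha\beta}-|\partial v|^{-2}v_\alpha v_{\bar\beta})v_{\alpha\bar\beta}$. Weak (viscosity) solutions of $v_t=\mathcal H(v)$: continuous $v$ such that for every $\phi$ smooth near $(z^0,t^0)$ with $v-\phi$ having a local max (resp. min) at $(z^0,t^0)$, $\phi_t\le\mathcal H(\phi)$ (resp. $\ge$) there if $\partial\phi\ne0$, and $\phi_t\le$ (resp. $\ge$) $\sum_{\alpha,\beta}(\delta_{\alpha\beta}-\eta_\alpha\bar\eta_\beta)\phi_{\alpha\bar\beta}$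 for some $|\eta|\le1$ if $\partial\phi=0$. For a $C^2$ function $w=w(x,y')$ (independent of $y_n$) define $\mathcal H_0(w)(x,y')=\mathcal H(w-y_n)$; this is well defined since $\partial(w-y_n)/\partial z_n=\tfrac12(w_{x_n}+i)\neq0$, and it is a degenerate elliptic quasilinear second-order operator in $(x,y')$ (the Levi operator for graphs $y_n=w$). A continuous $u(x,y',t)$ is a weak solution of $u_t=\mathcal H_0(u)$ if for every smooth $\phi(x,y',t)$ such that $u-\phi$ has a local maximum (resp. minimum) at a point, $\phi_t\le\mathcal H_0(\phi)$ (resp. $\phi_t\ge\mathcal H_0(\phi)$) at that point. *)

(* Defs.v *)
From Stdlib Require Import Reals ClassicalEpsilon.
From mathcomp Require Import all_boot.
Set Implicit Arguments. Unset Strict Implicit.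
Local Open Scope R_scope.

Definition upd {T : eqType} (p : T -> R) (i : T) (s : R) : T -> R :=
  fun j => if j == i then s else p j.

Definition has_pderiv {T : eqType} (f : (T -> R) -> R) (i : T) (p : T -> R) (l : R) : Prop :=
  derivable_pt_lim (fun s => f (upd p i s)) (p i) l.

(* the partial derivative function (the value is only meaningful where it exists) *)
Definition pderiv {T : eqType} (f : (T -> R) -> R) (i : T) (p : T -> R) : R :=
  epsilon (inhabits 0) (fun l => has_pderiv f i p l).

Definition ball {T : Type} (p : T -> R) (r : R) (q : T -> R) : Prop :=
  forall i, Rabs (q i - p i) < r.

Definition open_set {T : Type} (U : (T -> R) -> Prop) : Prop :=
  forall p, U p -> exists r, 0 < r /\ forall q, ball p r q -> U q.

Definition cont_on {T : Type} (U : (T -> R) -> Prop) (f : (T -> R) -> R) : Prop :=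
  forall p, U p -> forall eps, 0 < eps -> exists d, 0 < d /\
    forall q, U q -> ball p d q -> Rabs (f q - f p) < eps.

Definition connected {T : Type} (U : (T -> R) -> Prop) : Prop :=
  forall A B : (T -> R) -> Prop, open_set A -> open_set B ->
    (forall p, U p -> A p \/ B p) -> (forall p, U p -> A p -> B p -> False) ->
    (exists p, U p /\ A p) -> (exists p, U p /\ B p) -> False.

Definition domain {T : Type} (U : (T -> R) -> Prop) : Prop := open_set U /\ connected U.

Fixpoint Ck {T : eqType} (k : nat) (U : (T -> R) -> Prop) (f : (T -> R) -> R) : Prop :=
  match k with
  | O => cont_on U f
  | S k' => cont_on U f /\ (forall i p, U p -> exists l, has_pderiv f i p l) /\
            (forall i, Ck k' U (pderiv f i))
  end.

Definition smooth_near {T : eqType} (f : (T -> R) -> R) (p : T -> R) : Prop :=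
  exists r, 0 < r /\ forall k, Ck k (ball p r) f.

Definition C := (R * R)%type.
Definition C0 : C := (0, 0).
Definition C1 : C := (1, 0).
Definition Ci : C := (0, 1).
Definition Cadd (a b : C) : C := (fst a + fst b, snd a + snd b).
Definition Csub (a b : C) : C := (fst a - fst b, snd a - snd b).
Definition Cmul (a b : C) : C :=
  (fst a * fst b - snd a * snd b, fst a * snd b + snd a * fst b).
Definition Cscale (r : R) (a : C) : C := (r * fst a, r * snd a).
Definition Cconj (a : C) : C := (fst a, - snd a).
Definition Cnorm2 (a : C) : R := fst a * fst a + snd a * snd a.
Definition Re (a : C) : R := fst a.

Definition sumC (n : nat) (F : 'I_n -> C) : C := foldr Cadd C0 (map F (enum 'I_n)).
Definition sumR (n : nat) (F : 'I_n -> R) : R := foldr Rplus 0 (map F (enum 'I_n)).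

(* real coordinates of C^n: (false, a) = x_a, (true, a) = y_a  (a : 'I_n, 0-based) *)
Definition CT (n : nat) := (bool * 'I_n)%type.
(* space-time coordinates: Some c = spatial coordinate c, None = t *)
Definition STpt (n : nat) := option (CT n) -> R.

Definition xI {n} (a : 'I_n) : option (CT n) := Some (false, a).
Definition yI {n} (a : 'I_n) : option (CT n) := Some (true, a).

Definition dx {n} (a : 'I_n) (f : STpt n -> R) : STpt n -> R := pderiv f (xI a).
Definition dy {n} (a : 'I_n) (f : STpt n -> R) : STpt n -> R := pderiv f (yI a).

(* d/dz_a = (d/dx_a - i d/dy_a)/2 ,  d/dzbar_a = (d/dx_a + i d/dy_a)/2 on real f *)
Definition dz {n} (a : 'I_n) (f : STpt n -> R) (P : STpt n) : C :=
  (dx a f P / 2, - (dy a f P / 2)).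
Definition dzb {n} (a : 'I_n) (f : STpt n -> R) (P : STpt n) : C :=
  (dx a f P / 2, dy a f P / 2).
(* d/dz_a applied to a complex-valued function g = g1 + i g2 *)
Definition dzC {n} (a : 'I_n) (g1 g2 : STpt n -> R) (P : STpt n) : C :=
  Cadd (dz a g1 P) (Cmul Ci (dz a g2 P)).
(* v_{a bbar} = d/dz_a (d/dzbar_b v) *)
Definition hess {n} (a b : 'I_n) (f : STpt n -> R) (P : STpt n) : C :=
  dzC a (fun Q => dx b f Q / 2) (fun Q => dy b f Q / 2) P.

Definition kdelta {n} (a b : 'I_n) : C := if a == b then C1 else C0.

Definition grad2 {n} (f : STpt n -> R) (P : STpt n) : R :=
  sumR (fun a => Cnorm2 (dz a f P)).

(* H(v) = sum_{a,b} (delta_ab - |dv|^{-2} v_a v_bbar) v_{a bbar}  (a real number;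
   we take the real part of the complex sum) *)
Definition LeviH {n} (f : STpt n -> R) (P : STpt n) : R :=
  Re (sumC (fun a => sumC (fun b =>
    Cmul (Csub (kdelta a b) (Cscale (/ grad2 f P) (Cmul (dz a f P) (dzb b f P))))
         (hess a b f P)))).

Definition LeviDeg {n} (eta : 'I_n -> C) (f : STpt n -> R) (P : STpt n) : R :=
  Re (sumC (fun a => sumC (fun b =>
    Cmul (Csub (kdelta a b) (Cmul (eta a) (Cconj (eta b)))) (hess a b f P)))).

Definition dt {T : eqType} (f : (option T -> R) -> R) : (option T -> R) -> R := pderiv f None.

Definition loc_max {T : Type} (Om : (T -> R) -> Prop) (g : (T -> R) -> R) (p0 : T -> R) : Prop :=
  exists r, 0 < r /\ forall p, Om p -> ball p0 r p -> g p <= g p0.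
Definition loc_min {T : Type} (Om : (T -> R) -> Prop) (g : (T -> R) -> R) (p0 : T -> R) : Prop :=
  exists r, 0 < r /\ forall p, Om p -> ball p0 r p -> g p0 <= g p.

Definition weak_sol_H (n : nat) (Om : STpt n -> Prop) (v : STpt n -> R) : Prop :=
  cont_on Om v /\
  forall (phi : STpt n -> R) (P0 : STpt n), Om P0 -> smooth_near phi P0 ->
    (loc_max Om (fun P => v P - phi P) P0 ->
       (grad2 phi P0 <> 0 -> dt phi P0 <= LeviH phi P0) /\
       (grad2 phi P0 = 0 -> exists eta : 'I_n -> C,
           sumR (fun a => Cnorm2 (eta a)) <= 1 /\ dt phi P0 <= LeviDeg eta phi P0)) /\
    (loc_min Om (fun P => v P - phi P) P0 ->
       (grad2 phi P0 <> 0 -> dt phi P0 >= LeviH phi P0) /\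
       (grad2 phi P0 = 0 -> exists eta : 'I_n -> C,
           sumR (fun a => Cnorm2 (eta a)) <= 1 /\ dt phi P0 >= LeviDeg eta phi P0)).

Definition is_yn {n} (c : CT n) : bool := c.1 && (nat_of_ord c.2 == n.-1)%N.
Definition RI (n : nat) := {c : CT n | ~~ is_yn c}.
Definition RSTpt (n : nat) := option (RI n) -> R.

Definition proj {n} (P : STpt n) : RSTpt n := fun o => P (omap val o).
(* (x,y',t) |-> (z,t) with y_n := s *)
Definition lift {n} (Q : RSTpt n) (s : R) : STpt n :=
  fun o => match o with
           | None => Q None
           | Some c => match (insub c : option (RI n)) with
                       | Some c' => Q (Some c')
                       | None => s
                       end
           end.
Definition yn {n} (P : STpt n) : R :=
  match (insub n.-1 : option 'I_n) with Some a => P (yI a) | None => 0 end.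

Definition spatial {n} (P : STpt n) : CT n -> R := fun c => P (Some c).
Definition rspatial {n} (Q : RSTpt n) : RI n -> R := fun c => Q (Some c).

(* H_0(w)(x,y') := H(w - y_n) (evaluated at any z over (x,y'); we take y_n = 0) *)
Definition LeviH0 {n} (w : RSTpt n -> R) (Q : RSTpt n) : R :=
  LeviH (fun P => w (proj P) - yn P) (lift Q 0).

Definition weak_sol_H0 (n : nat) (Om : RSTpt n -> Prop) (u : RSTpt n -> R) : Prop :=
  cont_on Om u /\
  forall (phi : RSTpt n -> R) (Q0 : RSTpt n), Om Q0 -> smooth_near phi Q0 ->
    (loc_max Om (fun Q => u Q - phi Q) Q0 -> dt phi Q0 <= LeviH0 phi Q0) /\
    (loc_min Om (fun Q => u Q - phi Q) Q0 -> dt phi Q0 >= LeviH0 phi Q0).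

(* Main.v *)
Require Import Defs.
From Stdlib Require Import Reals Lra ClassicalEpsilon FunctionalExtensionality.
From mathcomp Require Import all_boot.
Local Open Scope R_scope.
Set Implicit Arguments. Unset Strict Implicit.
Section Gen.
Variable T : eqType.
Implicit Types (p q : T -> R) (f g : (T -> R) -> R).

Lemma upd_same p i s : upd p i s i = s.
Proof. by rewrite /upd eqxx. Qed.
Lemma upd_other p i j s : j != i -> upd p i s j = p j.
Proof. by rewrite /upd => /negbTE ->. Qed.
Lemma upd_id p i : upd p i (p i) = p.
Proof. apply: functional_extensionality => j; rewrite /upd; by case: eqP => // ->. Qed.
Lemma upd_upd p i s t : upd (upd p i s) i t = upd p i t.
Proof. apply: functional_extensionality => j; rewrite /upd; by case: eqP. Qed.

Lemma ball_center p r : 0 < r -> ball p r p.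
Proof. move=> hr i; rewrite Rminus_diag Rabs_R0 //. Qed.
Lemma ball_upd p r i s : 0 < r -> Rabs (s - p i) < r -> ball p r (upd p i s).
Proof. move=> hr hs j; rewrite /upd; case: eqP => [->//|_]; rewrite Rminus_diag Rabs_R0 //. Qed.
Lemma ball_trans p q x r1 r2 : ball p r1 q -> ball q r2 x -> ball p (r1 + r2) x.
Proof.
move=> h1 h2 i; have := h1 i; have := h2 i.
have -> : x i - p i = (x i - q i) + (q i - p i) by ring.
move=> a b; eapply Rle_lt_trans; [apply Rabs_triang| lra].
Qed.
Lemma ball_mono p q r1 r2 : r1 <= r2 -> ball p r1 q -> ball p r2 q.
Proof. move=> h b i; have := b i; lra. Qed.
Lemma ball_sym p q r : ball p r q -> ball q r p.
Proof. move=> b i; rewrite Rabs_minus_sym; exact: b. Qed.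
Lemma ball_upd2 p r i s : ball p r (upd p i s) -> Rabs (s - p i) < r.
Proof. move=> b; have := b i; by rewrite upd_same. Qed.
End Gen.

Lemma fin_margin (T : finType) (F : T -> R) r :
  (forall i, F i < r) -> exists m, m < r /\ forall i, F i <= m.
Proof.
move=> h.
suff: forall s : seq T, exists m, m < r /\ forall i, i \in s -> F i <= m.
  case/(_ (enum T)) => m [hm hi]; exists m; split=> // i; apply: hi; by rewrite mem_enum.
elim=> [|a s [m [hm hi]]]; first by exists (r - 1); split; [lra| by []].
exists (Rmax (F a) m); split; first by apply: Rmax_lub_lt.
move=> i; rewrite in_cons => /orP [/eqP ->|/hi]; [apply: Rmax_l| move=> ?; eapply Rle_trans; [eassumption|apply: Rmax_r]].
Qed.

Lemma open_ball (T : finType) (p : T -> R) r : Defs.open_set (ball p r).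
Proof.
move=> q hq; have [m [hm hi]] := @fin_margin T (fun i => Rabs (q i - p i)) r hq.
exists (r - m); split; first lra.
move=> x hx; have := ball_trans hq hx.
move=> _ i; have := hi i; have := hx i.
have -> : x i - p i = (x i - q i) + (q i - p i) by ring.
move=> a b; eapply Rle_lt_trans; [apply Rabs_triang| lra].
Qed.
Section Deriv.
Variable T : eqType.
Implicit Types (p q : T -> R) (f g : (T -> R) -> R).

Lemma pderiv_spec f i p : (exists l, has_pderiv f i p l) -> has_pderiv f i p (pderiv f i p).
Proof. move=> h; rewrite /pderiv; exact: (epsilon_spec (inhabits 0) _ h). Qed.

Lemma pderiv_eq f i p l : has_pderiv f i p l -> pderiv f i p = l.
Proof.
move=> h; have := pderiv_spec (ex_intro _ l h) => h'.
exact: (uniqueness_limite _ _ _ _ h' h).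
Qed.

Lemma has_pderiv_loc f g i p l r : 0 < r -> (forall q, ball p r q -> f q = g q) ->
  has_pderiv f i p l -> has_pderiv g i p l.
Proof.
move=> hr he; rewrite /has_pderiv => h.
apply: (derivable_pt_lim_locally_ext (fun s => f (upd p i s)) (fun s => g (upd p i s)) (p i) (p i - r) (p i + r) l _ _ h); first lra.
move=> z hz; apply: he; apply: ball_upd => //; apply: Rabs_def1; lra.
Qed.

Lemma has_pderiv_open f g i p l (U : (T -> R) -> Prop) : Defs.open_set U -> U p ->
  (forall q, U q -> f q = g q) -> has_pderiv f i p l -> has_pderiv g i p l.
Proof.
move=> hU hp he; have [r [hr hb]] := hU p hp.
apply: has_pderiv_loc hr _ => q hq; apply: he; exact: hb.
Qed.

Lemma has_pderiv_add f g i p a b : has_pderiv f i p a -> has_pderiv g i p b ->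
  has_pderiv (fun q => f q + g q) i p (a + b).
Proof. move=> h1 h2; exact: (derivable_pt_lim_plus _ _ _ _ _ h1 h2). Qed.

Lemma has_pderiv_scal c f i p a : has_pderiv f i p a ->
  has_pderiv (fun q => c * f q) i p (c * a).
Proof. move=> h1; exact: (derivable_pt_lim_scal _ _ _ _ h1). Qed.

Lemma has_pderiv_const c i p : has_pderiv (fun _ => c) i p 0.
Proof. exact: (derivable_pt_lim_const c (p i)). Qed.

Lemma has_pderiv_coord j i p : has_pderiv (fun q => q j) i p (if j == i then 1 else 0).
Proof.
rewrite /has_pderiv /upd; case: eqP => _.
- exact: derivable_pt_lim_id.
- exact: (derivable_pt_lim_const (p j) (p i)).
Qed.

Lemma has_pderiv_upd f i p c l : has_pderiv f i (upd p i c) l ->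
  derivable_pt_lim (fun s => f (upd p i s)) c l.
Proof.
rewrite /has_pderiv upd_same => h.
apply: (derivable_pt_lim_ext _ _ _ _ _ h) => z; by rewrite upd_upd.
Qed.

Lemma has_pderiv_upd' f i p c l : derivable_pt_lim (fun s => f (upd p i s)) c l ->
  has_pderiv f i (upd p i c) l.
Proof.
rewrite /has_pderiv upd_same => h.
apply: (derivable_pt_lim_ext _ _ _ _ _ h) => z; by rewrite upd_upd.
Qed.

Lemma ball_upd_upd p r j1 j2 a b : 0 < r -> Rabs a < r -> Rabs b < r ->
  ball p r (upd (upd p j1 (p j1 + a)) j2 (p j2 + b)).
Proof.
move=> hr ha hb k; rewrite /upd; case: eqP => [->|_].
  by have -> : p j2 + b - p j2 = b by ring.
case: eqP => [->|_]; last by rewrite Rminus_diag Rabs_R0.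
by have -> : p j1 + a - p j1 = a by ring.
Qed.
End Deriv.

Lemma mvt_any (F F' : R -> R) x y :
  (forall c, Rabs (c - x) <= Rabs (y - x) -> derivable_pt_lim F c (F' c)) ->
  exists c, Rabs (c - x) <= Rabs (y - x) /\ F y - F x = F' c * (y - x).
Proof.
move=> h; case: (Rtotal_order x y) => [lt|[eq|gt]].
- have [c [e hc]] : exists c, F y - F x = F' c * (y - x) /\ x < c < y.
    apply: MVT_cor2 => // c hc; apply: h; rewrite !Rabs_right; lra.
  exists c; split=> //; rewrite !Rabs_right; lra.
- subst; exists y; split; [rewrite Rminus_diag Rabs_R0; lra| ring].
- have [c [e hc]] : exists c, F x - F y = F' c * (x - y) /\ y < c < x.
    apply: MVT_cor2 => // c hc; apply: h; rewrite !Rabs_left1; lra.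
  exists c; split; first by rewrite !Rabs_left1; lra.
  have -> : F y - F x = - (F x - F y) by ring. rewrite e; ring.
Qed.
Section Chain.
Variable T : eqType.
Implicit Types (p q : T -> R) (f g : (T -> R) -> R).

Lemma lin_deriv c a : derivable_pt_lim (fun h => c + a * h) 0 a.
Proof.
have := derivable_pt_lim_plus (fun _ => c) (fun h => a * h) 0 0 (a * 1)
  (derivable_pt_lim_const c 0) (derivable_pt_lim_scal id a 0 1 (derivable_pt_lim_id 0)).
by rewrite Rplus_0_l Rmult_1_r.
Qed.

Lemma chain2 f p j1 j2 (a b r : R) (d1 : R) (d2 : (T -> R) -> R) :
  j1 != j2 -> 0 < r ->
  has_pderiv f j1 p d1 ->
  (forall x, ball p r x -> has_pderiv f j2 x (d2 x)) ->
  (forall e, 0 < e -> exists d, 0 < d /\ forall x, ball p d x -> Rabs (d2 x - d2 p) < e) ->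
  derivable_pt_lim (fun h => f (upd (upd p j1 (p j1 + a*h)) j2 (p j2 + b*h))) 0 (a * d1 + b * d2 p).
Proof.
move=> hj hr h1 h2 hc.
have hA : derivable_pt_lim (fun h => f (upd p j1 (p j1 + a*h))) 0 (a * d1).
  have := derivable_pt_lim_comp (fun h => p j1 + a * h) (fun s => f (upd p j1 s)) 0 a d1
     (lin_deriv (p j1) a).
  rewrite Rmult_0_r Rplus_0_r Rmult_comm => H; exact: H h1.
move=> eps heps.
have [[del1 hd1] HA] := hA (eps/2) ltac:(lra).
have hb00 := Rabs_pos b.
have [d2' [hd2' Hc]] := hc (eps / (2 * (Rabs b + 1))) ltac:(apply: Rdiv_lt_0_compat; lra).
set rho := Rmin r d2'.
have hrho : 0 < rho by apply: Rmin_glb_lt.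
set K := Rabs a + Rabs b + 1.
have hK : 0 < K by have := Rabs_pos a; have := Rabs_pos b; rewrite /K; lra.
have hdel : 0 < Rmin del1 (rho / K) by apply: Rmin_glb_lt => //; apply: Rdiv_lt_0_compat.
exists (mkposreal _ hdel) => h hh0 hh /=.
have hh1 : Rabs h < del1 by have := Rmin_l del1 (rho / K); simpl in hh; lra.
have hh2 : Rabs h * K < rho.
  have := Rmin_r del1 (rho / K); simpl in hh => H.
  have : Rabs h < rho / K by lra.
  move=> H'; have := Rmult_lt_compat_r K _ _ hK H'; rewrite /Rdiv Rmult_assoc Rinv_l; lra.
have hah : Rabs (a * h) < rho.
  rewrite Rabs_mult; have := Rabs_pos h; have := Rabs_pos a; have := Rabs_pos b.
  rewrite /K in hh2; nra.
have hbh : Rabs (b * h) < rho.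
  rewrite Rabs_mult; have := Rabs_pos h; have := Rabs_pos a; have := Rabs_pos b.
  rewrite /K in hh2; nra.
set ph := upd p j1 (p j1 + a * h).
have phj2 : ph j2 = p j2 by rewrite /ph upd_other // eq_sym.
have hder : forall c, Rabs (c - p j2) <= Rabs (p j2 + b * h - p j2) ->
    derivable_pt_lim (fun s => f (upd ph j2 s)) c (d2 (upd ph j2 c)).
  move=> c hcc.
  rewrite (_ : p j2 + b * h - p j2 = b * h) in hcc; last by ring.
  have hb : ball p rho (upd ph j2 c).
    have -> : c = p j2 + (c - p j2) by ring.
    apply: ball_upd_upd => //; lra.
  exact: has_pderiv_upd (h2 _ (ball_mono (Rmin_l r d2') hb)).
have [c [hcb hmvt]] := mvt_any hder.
have hb' : ball p rho (upd ph j2 c).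
  have -> : c = p j2 + (c - p j2) by ring.
  apply: ball_upd_upd => //.
  rewrite (_ : p j2 + b * h - p j2 = b * h) in hcb; [lra|ring].
have hb : ball p d2' (upd ph j2 c) by exact: ball_mono (Rmin_r r d2') hb'.
have Hc2 := Hc _ hb.
have HA2 := HA h hh0 hh1.
rewrite Rplus_0_l in HA2 *.
rewrite !Rmult_0_r !Rplus_0_r !upd_id in HA2 *.
rewrite -/ph in HA2 *.
have e1 : upd ph j2 (p j2) = ph by rewrite -phj2 upd_id.
rewrite e1 in hmvt.
have -> : (f (upd ph j2 (p j2 + b * h)) - f p) / h - (a * d1 + b * d2 p)
   = ((f ph - f p) / h - a * d1) + b * (d2 (upd ph j2 c) - d2 p).
  have -> : f (upd ph j2 (p j2 + b * h)) = f ph + d2 (upd ph j2 c) * (p j2 + b * h - p j2) by lra.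
  field; exact hh0.
eapply Rle_lt_trans; first apply Rabs_triang.
rewrite Rabs_mult.
have : Rabs b * Rabs (d2 (upd ph j2 c) - d2 p) <= Rabs b * (eps / (2 * (Rabs b + 1))).
  apply: Rmult_le_compat_l; [apply Rabs_pos| lra].
have : Rabs b * (eps / (2 * (Rabs b + 1))) < eps / 2.
  have hb0 := Rabs_pos b.
  apply: (Rmult_lt_reg_r (2 * (Rabs b + 1))); first lra.
  field_simplify; try lra; try nra.
lra.
Qed.
End Chain.
Section CkBasic.
Variable T : eqType.
Implicit Types (p q : T -> R) (f g : (T -> R) -> R) (U : (T -> R) -> Prop).

Lemma cont_on_ext U f g : (forall p, U p -> f p = g p) -> cont_on U f -> cont_on U g.
Proof.
move=> he hc p hp e he0; have [d [hd H]] := hc p hp e he0.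
exists d; split=> // q hq hb; rewrite -!he //; exact: H.
Qed.

Lemma cont_on_add U f g : cont_on U f -> cont_on U g -> cont_on U (fun p => f p + g p).
Proof.
move=> h1 h2 p hp e he.
have [d1 [hd1 H1]] := h1 p hp (e/2) ltac:(lra).
have [d2 [hd2 H2]] := h2 p hp (e/2) ltac:(lra).
exists (Rmin d1 d2); split; first by apply: Rmin_glb_lt.
move=> q hq hb.
have := H1 q hq (ball_mono (Rmin_l _ _) hb); have := H2 q hq (ball_mono (Rmin_r _ _) hb).
have -> : f q + g q - (f p + g p) = (f q - f p) + (g q - g p) by ring.
move=> a b; eapply Rle_lt_trans; [apply Rabs_triang| lra].
Qed.

Lemma cont_on_scal U c f : cont_on U f -> cont_on U (fun p => c * f p).
Proof.
move=> h p hp e he.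
have hc := Rabs_pos c.
have [d [hd H]] := h p hp (e / (Rabs c + 1)) ltac:(apply: Rdiv_lt_0_compat; lra).
exists d; split=> // q hq hb; have := H q hq hb.
rewrite -Rmult_minus_distr_l Rabs_mult => H'.
have : Rabs c * Rabs (f q - f p) <= Rabs c * (e / (Rabs c + 1)).
  apply: Rmult_le_compat_l => //; lra.
have : Rabs c * (e / (Rabs c + 1)) < e.
  apply: (Rmult_lt_reg_r (Rabs c + 1)); first lra.
  field_simplify; try lra; try nra.
lra.
Qed.

Lemma cont_on_const U c : cont_on U (fun _ => c).
Proof. move=> p hp e he; exists 1; split; [lra|move=> *; rewrite Rminus_diag Rabs_R0 //]. Qed.

Lemma cont_on_coord U j : cont_on U (fun p => p j).
Proof. move=> p hp e he; exists e; split=> // q hq hb; exact: hb j. Qed.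

Lemma cont_on_sub U U' f : (forall p, U' p -> U p) -> cont_on U f -> cont_on U' f.
Proof.
move=> hs h p hp e he; have [d [hd H]] := h p (hs _ hp) e he.
exists d; split=> // q hq; exact: H _ (hs _ hq).
Qed.

Lemma Ck_cont k U f : Ck k U f -> cont_on U f.
Proof. by case: k => [|k] //= [] . Qed.

Lemma Ck_ext k U f g : Defs.open_set U -> (forall p, U p -> f p = g p) -> Ck k U f -> Ck k U g.
Proof.
move=> hU; elim: k f g => [|k IH] f g he /=; first exact: cont_on_ext.
move=> [hc [hd hk]]; split; first exact: cont_on_ext hc.
split.
  move=> i p hp; have [l hl] := hd i p hp; exists l; exact: has_pderiv_open hU hp he hl.
move=> i; apply: (IH (pderiv f i)) (hk i) => p hp.
have [l hl] := hd i p hp.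
rewrite (pderiv_eq hl); symmetry; apply: pderiv_eq; exact: has_pderiv_open hU hp he hl.
Qed.

Lemma Ck_add k U f g : Defs.open_set U -> Ck k U f -> Ck k U g -> Ck k U (fun p => f p + g p).
Proof.
move=> hU; elim: k f g => [|k IH] f g /=; first exact: cont_on_add.
move=> [hc1 [hd1 hk1]] [hc2 [hd2 hk2]]; split; first exact: cont_on_add.
split.
  move=> i p hp; have [l1 h1] := hd1 i p hp; have [l2 h2] := hd2 i p hp.
  exists (l1 + l2); exact: has_pderiv_add.
move=> i; apply: (Ck_ext hU _ (IH _ _ (hk1 i) (hk2 i))) => p hp.
have [l1 h1] := hd1 i p hp; have [l2 h2] := hd2 i p hp.
rewrite (pderiv_eq h1) (pderiv_eq h2); symmetry; apply: pderiv_eq; exact: has_pderiv_add.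
Qed.

Lemma Ck_scal k U c f : Defs.open_set U -> Ck k U f -> Ck k U (fun p => c * f p).
Proof.
move=> hU; elim: k f => [|k IH] f /=; first exact: cont_on_scal.
move=> [hc1 [hd1 hk1]]; split; first exact: cont_on_scal.
split.
  move=> i p hp; have [l1 h1] := hd1 i p hp; exists (c * l1); exact: has_pderiv_scal.
move=> i; apply: (Ck_ext hU _ (IH _ (hk1 i))) => p hp.
have [l1 h1] := hd1 i p hp.
rewrite (pderiv_eq h1); symmetry; apply: pderiv_eq; exact: has_pderiv_scal.
Qed.

Lemma Ck_const k U c : Ck k U (fun _ => c).
Proof.
elim: k c => [|k IH] c /=; first exact: cont_on_const.
split; first exact: cont_on_const.
split; first by move=> i p _; exists 0; exact: has_pderiv_const.
move=> i; have -> : pderiv (fun _ : T -> R => c) i = fun _ => 0.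
  apply: functional_extensionality => p; apply: pderiv_eq; exact: has_pderiv_const.
exact: IH.
Qed.

Lemma Ck_coord k U j : Ck k U (fun p => p j).
Proof.
case: k => [|k] /=; first exact: cont_on_coord.
split; first exact: cont_on_coord.
split; first by move=> i p _; eexists; exact: has_pderiv_coord.
move=> i; have -> : pderiv (fun p : T -> R => p j) i = fun _ => if j == i then 1 else 0.
  apply: functional_extensionality => p; apply: pderiv_eq; exact: has_pderiv_coord.
exact: Ck_const.
Qed.

Lemma Ck_S k U f : Ck k.+1 U f -> Ck k U f.
Proof.
elim: k f => [|k IH] f /=; first by case.
move=> [hc [hd hk]]; split=> //; split=> // i; exact: IH.
Qed.

Lemma Ck_le m k U f : (m <= k)%N -> Ck k U f -> Ck m U f.
Proof.
move=> /subnK <-; elim: (k - m)%N => [|d IH] //= h; apply: IH; exact: Ck_S.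
Qed.

Lemma Ck_sub k U U' f : (forall p, U' p -> U p) -> Ck k U f -> Ck k U' f.
Proof.
move=> hs; elim: k f => [|k IH] f /=; first exact: cont_on_sub.
move=> [hc [hd hk]]; split; first exact: cont_on_sub hc.
split; first by move=> i p hp; exact: hd _ _ (hs _ hp).
move=> i; exact: IH.
Qed.

Lemma Ck1_pderiv k U f i p : U p -> Ck k.+1 U f -> has_pderiv f i p (pderiv f i p).
Proof. move=> hp [_ [hd _]]; apply: pderiv_spec; exact: hd. Qed.

Lemma Ck_pderiv k U f i : Ck k.+1 U f -> Ck k U (pderiv f i).
Proof. move=> [_ [_ hk]]; exact: hk. Qed.
End CkBasic.
Lemma deriv_shift (F : R -> R) x l :
  derivable_pt_lim (fun h => F (x + h)) 0 l -> derivable_pt_lim F x l.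
Proof.
move=> H e he; have [d Hd] := H e he; exists d => h h0 hh.
have := Hd h h0 hh; by rewrite Rplus_0_l Rplus_0_r.
Qed.

Section Comp.
Variables (T1 T2 : eqType) (L : (T1 -> R) -> (T2 -> R)).
Variables (U : (T1 -> R) -> Prop) (V : (T2 -> R) -> Prop).
Variables (j1 j2 : T1 -> T2) (a b : T1 -> R).
Hypothesis hU : Defs.open_set U.
Hypothesis hV : Defs.open_set V.
Hypothesis hUV : forall q, U q -> V (L q).
Hypothesis hLc : forall q e, 0 < e -> exists d, 0 < d /\ forall q', ball q d q' -> ball (L q) e (L q').
Hypothesis hLs : forall i q h, L (upd q i (q i + h)) =
  upd (upd (L q) (j1 i) (L q (j1 i) + a i * h)) (j2 i) (L q (j2 i) + b i * h).
Hypothesis hj : forall i, j1 i != j2 i.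

Lemma cont_on_comp f : cont_on V f -> cont_on U (fun q => f (L q)).
Proof.
move=> hc p hp e he; have [d [hd H]] := hc (L p) (hUV hp) e he.
have [d' [hd' H']] := hLc p hd.
exists d'; split=> // q hq hb; exact: H (hUV hq) (H' _ hb).
Qed.

Lemma comp_deriv k f i q : U q -> Ck k.+1 V f ->
  has_pderiv (fun q => f (L q)) i q (a i * pderiv f (j1 i) (L q) + b i * pderiv f (j2 i) (L q)).
Proof.
move=> hq hf; rewrite /has_pderiv; apply: deriv_shift.
apply: (derivable_pt_lim_ext (fun h => f (upd (upd (L q) (j1 i) (L q (j1 i) + a i * h)) (j2 i) (L q (j2 i) + b i * h)))).
  by move=> h; rewrite hLs.
have [r [hr hb]] := hV (hUV hq).
apply: (chain2 (a i) (b i) (hj i) hr).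
- exact (Ck1_pderiv (j1 i) (hUV hq) hf).
- move=> x hx; exact (Ck1_pderiv (j2 i) (hb _ hx) hf).
- move=> e he; have hc := Ck_cont (Ck_pderiv (j2 i) hf).
  have [d [hd H]] := hc (L q) (hUV hq) e he.
  exists (Rmin d r); split; first exact: Rmin_glb_lt.
  move=> x hx; apply: H; [apply: hb; exact: ball_mono (Rmin_r _ _) hx | exact: ball_mono (Rmin_l _ _) hx].
Qed.

Lemma pderiv_comp k f i q : U q -> Ck k.+1 V f ->
  pderiv (fun q => f (L q)) i q = a i * pderiv f (j1 i) (L q) + b i * pderiv f (j2 i) (L q).
Proof. move=> hq hf; apply: pderiv_eq; exact: comp_deriv hq hf. Qed.

Lemma Ck_comp k f : Ck k V f -> Ck k U (fun q => f (L q)).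
Proof.
elim: k f => [|k IH] f; first exact: cont_on_comp.
move=> hf; have hf' := hf; case: hf' => [hc [hd hk]]; split; first exact: cont_on_comp.
split.
  move=> i p hp; eexists; exact: comp_deriv hp hf.
move=> i.
apply: (Ck_ext hU (f := fun q => a i * pderiv f (j1 i) (L q) + b i * pderiv f (j2 i) (L q))).
  move=> p hp; symmetry; exact: pderiv_comp hp hf.
apply: Ck_add hU _ _; apply: Ck_scal hU _; apply: IH; exact: hk.
Qed.

Lemma comp_d2 k f i i' q : U q -> Ck k.+2 V f ->
  has_pderiv (pderiv (fun q => f (L q)) i) i' q
    (a i * (a i' * pderiv (pderiv f (j1 i)) (j1 i') (L q) + b i' * pderiv (pderiv f (j1 i)) (j2 i') (L q))
   + b i * (a i' * pderiv (pderiv f (j2 i)) (j1 i') (L q) + b i' * pderiv (pderiv f (j2 i)) (j2 i') (L q))).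
Proof.
move=> hq hf.
apply: (has_pderiv_open hU hq (f := fun q => a i * pderiv f (j1 i) (L q) + b i * pderiv f (j2 i) (L q))).
  move=> p hp; symmetry; exact: pderiv_comp hp (Ck_S hf).
apply: has_pderiv_add; apply: has_pderiv_scal; exact: comp_deriv hq (Ck_pderiv _ hf).
Qed.
End Comp.
Definition sumL {T : Type} (s : seq T) (F : T -> R) : R := foldr (fun x acc => F x + acc) 0 s.

Lemma sumL_ext {T : Type} (s : seq T) F G : (forall x, F x = G x) -> sumL s F = sumL s G.
Proof. move=> h; elim: s => //= x s ->; by rewrite h. Qed.
Lemma sumL_add {T : Type} (s : seq T) F G : sumL s (fun x => F x + G x) = sumL s F + sumL s G.
Proof. elim: s => /= [|x s ->]; ring. Qed.
Lemma sumL_scal {T : Type} (s : seq T) c F : sumL s (fun x => c * F x) = c * sumL s F.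
Proof. elim: s => /= [|x s ->]; ring. Qed.
Lemma sumL_delta {T : eqType} (s : seq T) (a : T) (X : R) : uniq s -> a \in s ->
  sumL s (fun x => if x == a then X else 0) = X.
Proof.
elim: s => //= x s IH /andP [hx hu]; rewrite in_cons => /orP [/eqP e|hi].
  subst x; rewrite eqxx.
  have -> : sumL s (fun x => if x == a then X else 0) = sumL s (fun _ => 0).
    elim: s hx {IH hu} => //= y s IH; rewrite in_cons negb_or => /andP [h1 h2].
    by rewrite eq_sym (negbTE h1) IH.
  have -> : forall s' : seq T, sumL s' (fun _ => 0) = 0 by elim => //= y s' ->; ring.
  ring.
rewrite IH //; case: eqP => [e|]; last by move=> _; ring.
by subst x; rewrite hi in hx.
Qed.
Lemma sumL_abs {T : Type} (s : seq T) F : Rabs (sumL s F) <= sumL s (fun x => Rabs (F x)).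
Proof.
elim: s => /= [|x s IH]; first by rewrite Rabs_R0; lra.
eapply Rle_trans; first apply Rabs_triang. lra.
Qed.
Lemma sumL_le {T : Type} (s : seq T) F G : (forall x, F x <= G x) -> sumL s F <= sumL s G.
Proof. move=> h; elim: s => /= [|x s IH]; [lra| have := h x; lra]. Qed.
Lemma sumL_ge0 {T : Type} (s : seq T) F : (forall x, 0 <= F x) -> 0 <= sumL s F.
Proof. move=> h; elim: s => /= [|x s IH]; [lra| have := h x; lra]. Qed.

Section Coords.
Variable n : nat.
Hypothesis hn : (2 <= n)%N.

Lemma a0_lt : (n.-1 < n)%N.
Proof. by case: n hn. Qed.
Definition a0 : 'I_n := Ordinal a0_lt.
Definition yc : CT n := (true, a0).
Lemma r0_prop : ~~ is_yn ((false, a0) : CT n).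
Proof. by []. Qed.
Definition r0 : RI n := exist _ ((false, a0) : CT n) r0_prop.

Lemma is_yn_yc c : is_yn c = (c == yc).
Proof.
by case: c => [[] b] //=.
Qed.

Lemma val_neq_yc (c : RI n) : val c != yc.
Proof. rewrite -is_yn_yc; exact: (valP c). Qed.

Lemma some_val_neq (c : RI n) : (Some (val c) == Some yc :> option (CT n)) = false.
Proof. apply/negbTE; exact: val_neq_yc. Qed.

Lemma CT_cases (c : CT n) : c = yc \/ exists c' : RI n, c = val c'.
Proof.
case h: (is_yn c); first by left; apply/eqP; rewrite -is_yn_yc.
right; have h' : ~~ is_yn c by rewrite h.
by exists (exist _ c h').
Qed.

Lemma insub_val (c : RI n) : (insub (val c) : option (RI n)) = Some c.
Proof. exact: valK. Qed.
Lemma insub_yc : (insub yc : option (RI n)) = None.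
Proof. apply: insubN; by rewrite is_yn_yc eqxx. Qed.

Lemma yn_eq (P : STpt n) : yn P = P (Some yc).
Proof.
rewrite /yn; have -> : (insub n.-1 : option 'I_n) = Some a0.
  by rewrite (insubT (fun i => (i < n)%N) a0_lt).
done.
Qed.

Lemma lift_None (Q : RSTpt n) s : Defs.lift Q s None = Q None.
Proof. by []. Qed.
Lemma lift_val (Q : RSTpt n) s (c : RI n) : Defs.lift Q s (Some (val c)) = Q (Some c).
Proof. by rewrite /Defs.lift insub_val. Qed.
Lemma lift_yc (Q : RSTpt n) s : Defs.lift Q s (Some yc) = s.
Proof. by rewrite /Defs.lift insub_yc. Qed.

Lemma proj_lift (Q : RSTpt n) s : proj (Defs.lift Q s) = Q.
Proof.
apply: functional_extensionality => -[c|] //=; rewrite /proj /=; exact: lift_val.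
Qed.
Lemma yn_lift (Q : RSTpt n) s : yn (Defs.lift Q s) = s.
Proof. by rewrite yn_eq lift_yc. Qed.
Lemma lift_proj (P : STpt n) : Defs.lift (proj P) (yn P) = P.
Proof.
apply: functional_extensionality => -[c|] //.
case: (CT_cases c) => [->|[c' ->]]; first by rewrite lift_yc yn_eq.
by rewrite lift_val.
Qed.

Lemma omap_val_inj (o o' : option (RI n)) : (omap val o == omap val o') = (o == o').
Proof.
by case: o => [c|]; case: o' => [c'|] //=.
Qed.
End Coords.
Lemma upd2_b0 {T : eqType} (X : T -> R) j1 j2 v h : j1 != j2 ->
  upd (upd X j1 v) j2 (X j2 + 0 * h) = upd X j1 v.
Proof.
move=> hj; rewrite Rmult_0_l Rplus_0_r.
have -> : X j2 = upd X j1 v j2 by rewrite upd_other // eq_sym.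
exact: upd_id.
Qed.

Section Maps.
Variable n : nat.
Hypothesis hn : (2 <= n)%N.

Definition j1p (i : option (CT n)) : option (RI n) :=
  match i with None => None | Some c => insub c end.
Definition j2p (i : option (CT n)) : option (RI n) :=
  if j1p i is Some _ then None else Some (r0 hn).
Definition ap (i : option (CT n)) : R :=
  match i with None => 1 | Some c => if (insub c : option (RI n)) is Some _ then 1 else 0 end.

Lemma j12p i : j1p i != j2p i.
Proof. rewrite /j2p; by case: (j1p i). Qed.

Lemma proj_shape i (P : STpt n) h : proj (upd P i (P i + h)) =
  upd (upd (proj P) (j1p i) (proj P (j1p i) + ap i * h)) (j2p i) (proj P (j2p i) + 0 * h).
Proof.
rewrite upd2_b0 ?j12p //.
case: i => [c|] /=.
- case: (CT_cases hn c) => [->|[c' ->]].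
  + rewrite insub_yc /= Rmult_0_l Rplus_0_r upd_id.
    apply: functional_extensionality => -[o|] //; rewrite /proj /= upd_other //.
    by rewrite some_val_neq.
  + rewrite insub_val /= Rmult_1_l.
    apply: functional_extensionality => o; rewrite /proj /upd.
    have -> : (omap val o == Some (val c')) = (o == Some c') by exact: (omap_val_inj o (Some c')).
    by [].
- rewrite Rmult_1_l; apply: functional_extensionality => -[o|] //.
Qed.

Lemma proj_ball (P P' : STpt n) d : ball P d P' -> ball (proj P) d (proj P').
Proof. move=> h o; exact: h. Qed.

Variables (s0 : R) (q0 : RSTpt n) (m : RI n -> R).
Definition Yf (q : RSTpt n) : R := s0 + sumL (enum {: RI n}) (fun c => m c * (q (Some c) - q0 (Some c))).
Definition Lm (q : RSTpt n) : STpt n := Defs.lift q (Yf q).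
Definition bL (i : option (RI n)) : R := match i with None => 0 | Some c => m c end.
Definition j1L (i : option (RI n)) : option (CT n) := omap val i.
Definition j2L (i : option (RI n)) : option (CT n) := Some (yc hn).

Lemma j12L i : j1L i != j2L i.
Proof. case: i => [c|] //=; rewrite /j2L /=; by rewrite some_val_neq. Qed.

Lemma Yf_upd i (q : RSTpt n) h : Yf (upd q i (q i + h)) = Yf q + bL i * h.
Proof.
rewrite /Yf; case: i => [c|] /=.
- have -> : (fun c0 : RI n => m c0 * (upd q (Some c) (q (Some c) + h) (Some c0) - q0 (Some c0)))
     = (fun c0 => m c0 * (q (Some c0) - q0 (Some c0)) + (if c0 == c then m c * h else 0)).
    apply: functional_extensionality => c0; rewrite /upd.
    have -> : (Some c0 == Some c) = (c0 == c) by [].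
    case: eqP => [->|_] /=; last by rewrite Rplus_0_r.
    have H : forall x y : R, m c * (x + h - y) = m c * (x - y) + m c * h by move=> x y; ring.
    apply: H.
  rewrite sumL_add sumL_delta ?enum_uniq ?mem_enum // /=.
  have H : forall A X, s0 + (A + X) = s0 + A + X by move=> *; ring.
  apply: H.
- have -> : (fun c0 : RI n => m c0 * (upd q None (q None + h) (Some c0) - q0 (Some c0)))
     = (fun c0 => m c0 * (q (Some c0) - q0 (Some c0))) by [].
  rewrite /= Rmult_0_l Rplus_0_r //.
Qed.

Lemma Lm_shape i (q : RSTpt n) h : Lm (upd q i (q i + h)) =
  upd (upd (Lm q) (j1L i) (Lm q (j1L i) + 1 * h)) (j2L i) (Lm q (j2L i) + bL i * h).
Proof.
rewrite /Lm Yf_upd /j2L lift_yc.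
apply: functional_extensionality => -[o|].
- case: (CT_cases hn o) => [->|[c' ->]].
  + by rewrite lift_yc upd_same.
  + rewrite lift_val [in RHS]upd_other; last exact: (negbT (some_val_neq hn c')).
    case: i => [c|] /=.
    * rewrite /upd.
      case: (c' =P c) => [->|hne]; first by rewrite !eqxx insub_val Rmult_1_l.
      have h1 : (Some c' == Some c) = false by apply/eqP => -[].
      have h2 : (Some (val c') == Some (val c) :> option (CT n)) = false.
        by apply/eqP => -[/val_inj].
      by rewrite h1 h2 lift_val.
    * by rewrite !upd_other // lift_val.
- rewrite upd_other //; case: i => [c|] /=.
  + by rewrite upd_other.
  + by rewrite !upd_same Rmult_1_l.
Qed.

Definition Mb : R := sumL (enum {: RI n}) (fun c => Rabs (m c)).
Lemma Mb_ge0 : 0 <= Mb.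
Proof. apply: sumL_ge0 => c; exact: Rabs_pos. Qed.

Lemma Yf_lip (q q' : RSTpt n) d : 0 < d -> ball q d q' -> Rabs (Yf q' - Yf q) <= Mb * d.
Proof.
move=> hd hb; rewrite /Yf.
have -> : s0 + sumL (enum {: RI n}) (fun c => m c * (q' (Some c) - q0 (Some c))) -
   (s0 + sumL (enum {: RI n}) (fun c => m c * (q (Some c) - q0 (Some c))))
   = sumL (enum {: RI n}) (fun c => m c * (q' (Some c) - q (Some c))).
  have -> : sumL (enum {: RI n}) (fun c => m c * (q' (Some c) - q (Some c))) =
     sumL (enum {: RI n}) (fun c => m c * (q' (Some c) - q0 (Some c)) + (-1) * (m c * (q (Some c) - q0 (Some c)))).
    apply: sumL_ext => c; ring.
  rewrite sumL_add sumL_scal; ring.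
eapply Rle_trans; first apply: sumL_abs.
rewrite /Mb Rmult_comm -sumL_scal.
apply: sumL_le => c; rewrite Rabs_mult Rmult_comm.
apply: Rmult_le_compat_r; [exact: Rabs_pos| ].
have := hb (Some c); lra.
Qed.

Lemma Lm_ball (q q' : RSTpt n) e : 0 < e -> ball q (e / (Mb + 1)) q' -> ball (Lm q) e (Lm q').
Proof.
move=> he hb; have hM := Mb_ge0.
have hd : 0 < e / (Mb + 1) by apply: Rdiv_lt_0_compat; lra.
have hde : e / (Mb + 1) <= e.
  apply: (Rmult_le_reg_r (Mb + 1)); first lra.
  field_simplify; try lra; nra.
have hMd : Mb * (e / (Mb + 1)) < e.
  apply: (Rmult_lt_reg_r (Mb + 1)); first lra.
  field_simplify; try lra; nra.
move=> -[o|].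
- case: (CT_cases hn o) => [->|[c' ->]].
  + rewrite /Lm !lift_yc; have := Yf_lip hd hb; lra.
  + rewrite /Lm !lift_val; have := hb (Some c'); lra.
- rewrite /Lm !lift_None; have := hb None; lra.
Qed.
End Maps.
Definition Copp (a : Defs.C) : Defs.C := (- fst a, - snd a).
Lemma C_ring : ring_theory Defs.C0 Defs.C1 Cadd Cmul Csub Copp (@eq Defs.C).
Proof.
split; move=> *; rewrite /Defs.C0 /Defs.C1 /Cadd /Cmul /Csub /Copp /=; repeat match goal with x : Defs.C |- _ => destruct x end;
  simpl; f_equal; ring.
Qed.
Add Ring Cring : C_ring.

Lemma C_eq (a b : Defs.C) : fst a = fst b -> snd a = snd b -> a = b.
Proof. case: a => ? ?; case: b => ? ? /= -> -> //. Qed.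

Definition sumCL {T : Type} (s : seq T) (F : T -> Defs.C) : Defs.C := foldr (fun x acc => Cadd (F x) acc) Defs.C0 s.

Lemma sumC_L n (F : 'I_n -> Defs.C) : sumC F = sumCL (enum 'I_n) F.
Proof. rewrite /sumC; elim: (enum 'I_n) => //= x s ->. done. Qed.
Lemma sumR_L n (F : 'I_n -> R) : sumR F = sumL (enum 'I_n) F.
Proof. rewrite /sumR; elim: (enum 'I_n) => //= x s ->. done. Qed.

Section SumC.
Variable T : Type.
Implicit Types (s : seq T) (F G : T -> Defs.C).
Lemma sumCL_ext s F G : (forall x, F x = G x) -> sumCL s F = sumCL s G.
Proof. move=> h; elim: s => //= x s ->; by rewrite h. Qed.
Lemma sumCL_add s F G : sumCL s (fun x => Cadd (F x) (G x)) = Cadd (sumCL s F) (sumCL s G).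
Proof. elim: s => /= [|x s ->]; ring. Qed.
Lemma sumCL_mull s c F : sumCL s (fun x => Cmul c (F x)) = Cmul c (sumCL s F).
Proof. elim: s => /= [|x s ->]; ring. Qed.
Lemma sumCL_opp s F : sumCL s (fun x => Copp (F x)) = Copp (sumCL s F).
Proof. elim: s => /= [|x s ->]; ring. Qed.
Lemma sumCL_zero s : sumCL s (fun _ => Defs.C0) = Defs.C0.
Proof. elim: s => /= [|x s ->]; ring. Qed.
Lemma sumCL_norm s F : sumCL s (fun x => Cmul (F x) (Cconj (F x))) = (sumL s (fun x => Cnorm2 (F x)), 0).
Proof.
elim: s => /= [|x s ->] //; apply: C_eq; rewrite /Cmul /Cconj /Cnorm2 /=; ring.
Qed.
End SumC.

Lemma sumCL_delta {T : eqType} (s : seq T) a (F : T -> Defs.C) : uniq s -> a \in s ->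
  sumCL s (fun x => Cmul (if a == x then Defs.C1 else Defs.C0) (F x)) = F a.
Proof.
elim: s => //= x s IH /andP [hx hu]; rewrite in_cons => /orP [/eqP e|hi].
  subst x; rewrite eqxx.
  have -> : sumCL s (fun x => Cmul (if a == x then Defs.C1 else Defs.C0) (F x)) = sumCL s (fun _ => Defs.C0).
    elim: s hx {IH hu} => //= y s IH; rewrite in_cons negb_or => /andP [h1 h2].
    rewrite (negbTE h1) IH //; ring.
  rewrite sumCL_zero; ring.
rewrite IH //; case: eqP => [e|_]; last ring.
by subst x; rewrite hi in hx.
Qed.

Section Levi.
Variable n : nat.

Definition LeviGen (Z Zb : 'I_n -> Defs.C) (g2 : R) (Hs : 'I_n -> 'I_n -> Defs.C) : R :=
  Re (sumC (fun a => sumC (fun b =>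
    Cmul (Csub (kdelta a b) (Cscale (/ g2) (Cmul (Z a) (Zb b)))) (Hs a b)))).

Lemma LeviH_Gen (f : STpt n -> R) P :
  LeviH f P = LeviGen (fun a => dz a f P) (fun b => dzb b f P) (grad2 f P) (fun a b => hess a b f P).
Proof. by []. Qed.

Lemma LeviGen_ext Z Zb g2 H1 H2 : (forall a b, H1 a b = H2 a b) -> LeviGen Z Zb g2 H1 = LeviGen Z Zb g2 H2.
Proof.
move=> h; rewrite /LeviGen; have -> // : H1 = H2.
apply: functional_extensionality => a; apply: functional_extensionality => b; exact: h.
Qed.

Lemma sumC_ext (F G : 'I_n -> Defs.C) : (forall x, F x = G x) -> sumC F = sumC G.
Proof. rewrite !sumC_L; exact: sumCL_ext. Qed.
Lemma sumC_add (F G : 'I_n -> Defs.C) : sumC (fun x => Cadd (F x) (G x)) = Cadd (sumC F) (sumC G).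
Proof. rewrite !sumC_L; exact: sumCL_add. Qed.
Lemma sumC_mull c (F : 'I_n -> Defs.C) : sumC (fun x => Cmul c (F x)) = Cmul c (sumC F).
Proof. rewrite !sumC_L; exact: sumCL_mull. Qed.
Lemma sumC_opp (F : 'I_n -> Defs.C) : sumC (fun x => Copp (F x)) = Copp (sumC F).
Proof. rewrite !sumC_L; exact: sumCL_opp. Qed.
Lemma sumC_delta a (F : 'I_n -> Defs.C) : sumC (fun x => Cmul (kdelta a x) (F x)) = F a.
Proof. rewrite sumC_L; apply: sumCL_delta; [exact: enum_uniq| exact: mem_enum]. Qed.
Lemma sumC_norm (F : 'I_n -> Defs.C) : sumC (fun x => Cmul (F x) (Cconj (F x))) = (sumR (fun x => Cnorm2 (F x)), 0).
Proof. rewrite sumC_L sumR_L; exact: sumCL_norm. Qed.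

Lemma LeviGen_add Z Zb g2 H1 H2 :
  LeviGen Z Zb g2 (fun a b => Cadd (H1 a b) (H2 a b)) = LeviGen Z Zb g2 H1 + LeviGen Z Zb g2 H2.
Proof.
rewrite /LeviGen.
have inner : forall a, sumC (fun b => Cmul (Csub (kdelta a b) (Cscale (/ g2) (Cmul (Z a) (Zb b)))) (Cadd (H1 a b) (H2 a b)))
  = Cadd (sumC (fun b => Cmul (Csub (kdelta a b) (Cscale (/ g2) (Cmul (Z a) (Zb b)))) (H1 a b)))
         (sumC (fun b => Cmul (Csub (kdelta a b) (Cscale (/ g2) (Cmul (Z a) (Zb b)))) (H2 a b))).
  move=> a; rewrite -sumC_add; apply: sumC_ext => b; ring.
by rewrite (sumC_ext inner) sumC_add.
Qed.

Lemma LeviGen_opp Z Zb g2 H1 :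
  LeviGen Z Zb g2 (fun a b => Copp (H1 a b)) = - LeviGen Z Zb g2 H1.
Proof.
rewrite /LeviGen.
have inner : forall a, sumC (fun b => Cmul (Csub (kdelta a b) (Cscale (/ g2) (Cmul (Z a) (Zb b)))) (Copp (H1 a b)))
  = Copp (sumC (fun b => Cmul (Csub (kdelta a b) (Cscale (/ g2) (Cmul (Z a) (Zb b)))) (H1 a b))).
  move=> a; rewrite -sumC_opp; apply: sumC_ext => b; ring.
by rewrite (sumC_ext inner) sumC_opp.
Qed.

Lemma LeviGen_rank1 Z Zb g2 (X Y : 'I_n -> Defs.C) :
  LeviGen Z Zb g2 (fun a b => Cmul (X a) (Y b)) =
  Re (Csub (sumC (fun a => Cmul (X a) (Y a)))
           (Cscale (/ g2) (Cmul (sumC (fun a => Cmul (Z a) (X a))) (sumC (fun b => Cmul (Zb b) (Y b)))))).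
Proof.
rewrite /LeviGen.
have inner : forall a, sumC (fun b => Cmul (Csub (kdelta a b) (Cscale (/ g2) (Cmul (Z a) (Zb b)))) (Cmul (X a) (Y b)))
  = Cadd (Cmul (X a) (Y a)) (Cmul (Copp (Cscale (/ g2) (Cmul (Z a) (X a)))) (sumC (fun b => Cmul (Zb b) (Y b)))).
  move=> a; rewrite -sumC_mull -(sumC_delta a (fun b => Cmul (X a) (Y b))) -sumC_add.
  apply: sumC_ext => b; rewrite /Cscale /Copp /kdelta; case: (a == b); apply: C_eq; rewrite /Cmul /Cadd /Csub /=; ring.
rewrite (sumC_ext inner) sumC_add.
have -> : (fun a => Cmul (Copp (Cscale (/ g2) (Cmul (Z a) (X a)))) (sumC (fun b => Cmul (Zb b) (Y b))))
   = (fun a => Cmul (Copp (Cscale (/ g2) (sumC (fun b => Cmul (Zb b) (Y b))))) (Cmul (Z a) (X a))).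
  apply: functional_extensionality => a; apply: C_eq; rewrite /Cmul /Copp /Cscale /=; ring.
rewrite sumC_mull; rewrite /Re /Cadd /Csub /Cmul /Copp /Cscale /=; ring.
Qed.

Lemma LeviGen_killX (Z : 'I_n -> Defs.C) Y :
  sumR (fun a => Cnorm2 (Z a)) <> 0 ->
  LeviGen Z (fun b => Cconj (Z b)) (sumR (fun a => Cnorm2 (Z a))) (fun a b => Cmul (Cconj (Z a)) (Y b)) = 0.
Proof.
move=> h; rewrite LeviGen_rank1.
have -> : sumC (fun a => Cmul (Z a) (Cconj (Z a))) = (sumR (fun a => Cnorm2 (Z a)), 0) by exact: sumC_norm.
set S := sumC _; set g := sumR _.
rewrite /Re /Csub /Cscale /Cmul /=; field; exact: h.
Qed.

Lemma LeviGen_killY (Z : 'I_n -> Defs.C) X :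
  sumR (fun a => Cnorm2 (Z a)) <> 0 ->
  LeviGen Z (fun b => Cconj (Z b)) (sumR (fun a => Cnorm2 (Z a))) (fun a b => Cmul (X a) (Z b)) = 0.
Proof.
move=> h; rewrite LeviGen_rank1.
have -> : sumC (fun b => Cmul (Cconj (Z b)) (Z b)) = (sumR (fun a => Cnorm2 (Z a)), 0).
  rewrite -sumC_norm; apply: sumC_ext => b; ring.
have -> : sumC (fun a => Cmul (Z a) (X a)) = sumC (fun a => Cmul (X a) (Z a)) by apply: sumC_ext => a; ring.
set S := sumC _; set g := sumR _.
rewrite /Re /Csub /Cscale /Cmul /=; field; exact: h.
Qed.
End Levi.
Section LeviD.
Variable n : nat.

Definition ZD (d1 : CT n -> R) (a : 'I_n) : Defs.C := (d1 (false, a) / 2, - (d1 (true, a) / 2)).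
Definition hessD (d2 : CT n -> CT n -> R) (a b : 'I_n) : Defs.C :=
  Cadd (d2 (false, a) (false, b) / 2 / 2, - (d2 (true, a) (false, b) / 2 / 2))
       (Cmul Ci (d2 (false, a) (true, b) / 2 / 2, - (d2 (true, a) (true, b) / 2 / 2))).
Definition LeviD (d1 : CT n -> R) (d2 : CT n -> CT n -> R) : R :=
  LeviGen (ZD d1) (fun b => Cconj (ZD d1 b)) (sumR (fun a => Cnorm2 (ZD d1 a))) (hessD d2).

Lemma has_pderiv_div2 {T : eqType} (g : (T -> R) -> R) i p l :
  has_pderiv g i p l -> has_pderiv (fun q => g q / 2) i p (l / 2).
Proof.
move=> h; have := has_pderiv_scal (/2) h.
have -> : (fun q => / 2 * g q) = (fun q => g q / 2).
  apply: functional_extensionality => q; rewrite /Rdiv; ring.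
by rewrite /Rdiv Rmult_comm.
Qed.

Lemma LeviH_D (f : STpt n -> R) P (d2 : CT n -> CT n -> R) :
  (forall c c', has_pderiv (pderiv f (Some c')) (Some c) P (d2 c c')) ->
  LeviH f P = LeviD (fun c => pderiv f (Some c) P) d2.
Proof.
move=> hd; rewrite LeviH_Gen /LeviD.
have e1 : (fun a => dzb a f P) = (fun b => Cconj (ZD (fun c => pderiv f (Some c) P) b)).
  apply: functional_extensionality => b; rewrite /dzb /Cconj /ZD /=; by rewrite Ropp_involutive.
have e2 : (fun a b => hess a b f P) = hessD d2.
  apply: functional_extensionality => a; apply: functional_extensionality => b.
  rewrite /hess /dzC /dz /dx /dy /hessD /xI /yI.
  by rewrite !(pderiv_eq (has_pderiv_div2 (hd _ _))).
by rewrite e1 e2.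
Qed.

Lemma LeviGen_oppZ (Z Zb : 'I_n -> Defs.C) g2 H :
  LeviGen (fun a => Copp (Z a)) (fun b => Copp (Zb b)) g2 H = LeviGen Z Zb g2 H.
Proof.
rewrite /LeviGen; congr Re; apply: sumC_ext => a; apply: sumC_ext => b.
have -> : Cmul (Copp (Z a)) (Copp (Zb b)) = Cmul (Z a) (Zb b) by ring.
done.
Qed.

Lemma LeviD_opp (d1 : CT n -> R) (d2 : CT n -> CT n -> R) : LeviD (fun c => - d1 c) (fun c c' => - d2 c c') = - LeviD d1 d2.
Proof.
rewrite /LeviD -LeviGen_opp.
have e1 : ZD (fun c => - d1 c) = (fun a => Copp (ZD d1 a)).
  apply: functional_extensionality => a; apply: C_eq; rewrite /ZD /Copp /=; field.
have e2 : (fun a => Cnorm2 (ZD (fun c => - d1 c) a)) = (fun a => Cnorm2 (ZD d1 a)).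
  apply: functional_extensionality => a; rewrite /Cnorm2 /ZD /=; field.
rewrite e2 e1.
have e3 : (fun b => Cconj (Copp (ZD d1 b))) = (fun b => Copp (Cconj (ZD d1 b))).
  apply: functional_extensionality => b; apply: C_eq; rewrite /Cconj /Copp //=.
rewrite e3 LeviGen_oppZ; apply: LeviGen_ext => a b.
apply: C_eq; rewrite /hessD /Copp /Cadd /Cmul /Ci /=; field.
Qed.

Definition Aof (al : CT n -> R) (a : 'I_n) : Defs.C := (al (false, a) / 2, - (al (true, a) / 2)).

Lemma hessD_rank1 (al be : CT n -> R) a b :
  hessD (fun c c' => al c * be c') a b = Cmul (Aof al a) (Cconj (Aof be b)).
Proof. apply: C_eq; rewrite /hessD /Aof /Cadd /Cmul /Ci /Cconj /=; field. Qed.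

Lemma hessD_add (d2 e2 : CT n -> CT n -> R) a b : hessD (fun c c' => d2 c c' + e2 c c') a b = Cadd (hessD d2 a b) (hessD e2 a b).
Proof. apply: C_eq; rewrite /hessD /Cadd /Cmul /Ci /=; field. Qed.

Lemma LeviD_ext (d1 : CT n -> R) (d2 e2 : CT n -> CT n -> R) : (forall c c', d2 c c' = e2 c c') -> LeviD d1 d2 = LeviD d1 e2.
Proof.
move=> h; have -> // : d2 = e2.
apply: functional_extensionality => c; apply: functional_extensionality => c'; exact: h.
Qed.

Lemma LeviD_hard (d1 : CT n -> R) (d2 : CT n -> CT n -> R) (l rr cc : CT n -> R) pyy :
  (forall a, l (false, a) = d1 (false, a)) -> (forall a, l (true, a) = - d1 (true, a)) ->
  sumR (fun a => Cnorm2 (ZD d1 a)) <> 0 ->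
  LeviD d1 (fun c c' => d2 c c' + l c * rr c' + cc c * l c' + pyy * l c * l c') = LeviD d1 d2.
Proof.
move=> hx hy hg; rewrite /LeviD.
have hAl : forall a, Aof l a = Cconj (ZD d1 a).
  move=> a; apply: C_eq; rewrite /Aof /ZD /Cconj /= ?hx ?hy; field.
rewrite (LeviGen_ext _ _ _ (H2 := fun a b => Cadd (Cadd (Cadd (hessD d2 a b)
   (Cmul (Cconj (ZD d1 a)) (Cconj (Aof rr b))))
   (Cmul (Aof cc a) (ZD d1 b)))
   (Cmul (Aof (fun c => pyy * l c) a) (ZD d1 b)))).
  rewrite !LeviGen_add LeviGen_killX // LeviGen_killY // LeviGen_killY //; ring.
move=> a b.
rewrite (hessD_add (fun c c' => d2 c c' + l c * rr c' + cc c * l c')).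
rewrite (hessD_add (fun c c' => d2 c c' + l c * rr c')).
rewrite hessD_add !hessD_rank1.
rewrite hAl.
have -> : Cconj (Aof l b) = ZD d1 b.
  apply: C_eq; rewrite /Aof /ZD /Cconj /= ?hx ?hy; field.
by [].
Qed.
End LeviD.
Lemma deriv_max_zero (g : R -> R) x l r : 0 < r -> derivable_pt_lim g x l ->
  (forall y, Rabs (y - x) < r -> g y <= g x) -> l = 0.
Proof.
move=> hr hd hm.
case: (Rtotal_order l 0) => [lt|[//|gt]].
- have [[d hd0] Hd] := hd (- l / 2) ltac:(lra).
  have hmin := Rmin_glb_lt d r 0 hd0 hr.
  have hm1 := Rmin_l d r; have hm2 := Rmin_r d r.
  have [h [hneg [hhd hhr]]] : exists h, h < 0 /\ - h < d /\ - h < r.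
    exists (- (Rmin d r / 2)); lra.
  have hh0 : h <> 0 by lra.
  have hha : Rabs h < d by rewrite Rabs_left; lra.
  have H2 := Hd h hh0 hha.
  have H1 : g (x + h) <= g x.
    apply: hm; have -> : x + h - x = h by ring. rewrite Rabs_left; lra.
  have : (g (x + h) - g x) / h >= 0.
    have hi : / h < 0 by apply: Rinv_lt_0_compat.
    have e : (g (x+h) - g x) * / h = (g x - g (x+h)) * (- / h) by ring.
    rewrite /Rdiv e; apply: Rle_ge; apply: Rmult_le_pos; lra.
  move: H2; move/Rabs_def2 => [? ?]; lra.
- have [[d hd0] Hd] := hd (l / 2) ltac:(lra).
  have hmin := Rmin_glb_lt d r 0 hd0 hr.
  have hm1 := Rmin_l d r; have hm2 := Rmin_r d r.
  have [h [hneg [hhd hhr]]] : exists h, 0 < h /\ h < d /\ h < r.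
    exists (Rmin d r / 2); lra.
  have hh0 : h <> 0 by lra.
  have hha : Rabs h < d by rewrite Rabs_right; lra.
  have H2 := Hd h hh0 hha.
  have H1 : g (x + h) <= g x.
    apply: hm; have -> : x + h - x = h by ring. rewrite Rabs_right; lra.
  have : (g (x + h) - g x) / h <= 0.
    have hi : 0 < / h by apply: Rinv_0_lt_compat.
    have e : (g (x+h) - g x) * / h = - ((g x - g (x+h)) * / h) by ring.
    rewrite /Rdiv e; have : 0 <= (g x - g (x+h)) * / h by apply: Rmult_le_pos; lra.
    lra.
  move: H2; move/Rabs_def2 => [? ?]; lra.
Qed.

Lemma deriv_min_zero (g : R -> R) x l r : 0 < r -> derivable_pt_lim g x l ->
  (forall y, Rabs (y - x) < r -> g x <= g y) -> l = 0.
Proof.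
move=> hr hd hm.
have := deriv_max_zero (g := fun y => - g y) hr (derivable_pt_lim_opp _ _ _ hd).
move=> H; have : - l = 0 by apply: H => y hy; have := hm y hy; lra.
lra.
Qed.

Lemma sumL_term {T : eqType} (s : seq T) (F : T -> R) a : a \in s -> (forall x, 0 <= F x) -> F a <= sumL s F.
Proof.
move=> ha h0; elim: s ha => //= x s IH; rewrite in_cons => /orP [/eqP ->|hi].
  have := sumL_ge0 s h0; lra.
have := IH hi; have := h0 x; lra.
Qed.
Section Wrappers.
Variable n : nat.
Hypothesis hn : (2 <= n)%N.

Lemma grad2_pos (f : STpt n -> R) P : pderiv f (Some (yc hn)) P <> 0 -> grad2 f P <> 0.
Proof.
move=> h; rewrite /grad2 sumR_L.
have h1 := @sumL_term _ (enum 'I_n) (fun a => Cnorm2 (dz a f P)) (a0 hn) (mem_enum _ _)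
   ltac:(move=> a; rewrite /Cnorm2; nra).
have : 0 < Cnorm2 (dz (a0 hn) f P).
  rewrite /Cnorm2 /dz /dy /yI /=.
  have : pderiv f (Some (true, a0 hn)) P <> 0 by exact: h.
  move=> h'; have : 0 < (pderiv f (Some (true, a0 hn)) P / 2) * (pderiv f (Some (true, a0 hn)) P / 2).
    apply: Rsqr_pos_lt; move=> e; apply: h'; lra.
  nra.
move=> H0 E; rewrite E in h1; lra.
Qed.

Lemma proj_upd_yc (P : STpt n) s : proj (upd P (Some (yc hn)) s) = proj P.
Proof.
apply: functional_extensionality => -[o|] //; rewrite /proj /= upd_other //.
by rewrite some_val_neq.
Qed.

Lemma yn_upd_yc (P : STpt n) s : yn (upd P (Some (yc hn)) s) = s.
Proof. by rewrite yn_eq upd_same. Qed.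

Section ProjW.
Variables (P0 : STpt n) (r : R).
Lemma proj_hUV : forall q, ball P0 r q -> ball (proj P0) r (proj q).
Proof. move=> q hq; exact: proj_ball. Qed.
Lemma proj_hLc : forall (q : STpt n) e, 0 < e -> exists d, 0 < d /\ forall q', ball q d q' -> ball (proj q) e (proj q').
Proof. move=> q e he; exists e; split=> // q' hq; exact: proj_ball. Qed.
Lemma proj_hLs : forall i (q : STpt n) h, proj (upd q i (q i + h)) =
  upd (upd (proj q) (j1p i) (proj q (j1p i) + ap i * h)) (j2p hn i) (proj q (j2p hn i) + (fun _ => 0) i * h).
Proof. exact: proj_shape. Qed.

Lemma Ck_proj k f : Ck k (ball (proj P0) r) f -> Ck k (ball P0 r) (fun P => f (proj P)).
Proof. exact (Ck_comp (@open_ball _ P0 r) (@open_ball _ (proj P0) r) proj_hUV proj_hLc proj_hLs (j12p hn) (k:=k) (f:=f)). Qed.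

Lemma deriv_proj k f i P : ball P0 r P -> Ck k.+1 (ball (proj P0) r) f ->
  has_pderiv (fun P => f (proj P)) i P (ap i * pderiv f (j1p i) (proj P) + (fun _ => 0) i * pderiv f (j2p hn i) (proj P)).
Proof. move=> hP hf; exact (comp_deriv (@open_ball _ (proj P0) r) proj_hUV proj_hLs (j12p hn) i hP hf). Qed.

Lemma pderiv_proj k f i P : ball P0 r P -> Ck k.+1 (ball (proj P0) r) f ->
  pderiv (fun P => f (proj P)) i P = ap i * pderiv f (j1p i) (proj P) + 0 * pderiv f (j2p hn i) (proj P).
Proof. move=> hP hf; exact (pderiv_comp (@open_ball _ (proj P0) r) proj_hUV proj_hLs (j12p hn) i hP hf). Qed.

Lemma d2_proj k f i i' P : ball P0 r P -> Ck k.+2 (ball (proj P0) r) f ->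
  has_pderiv (pderiv (fun P => f (proj P)) i) i' P
    (ap i * (ap i' * pderiv (pderiv f (j1p i)) (j1p i') (proj P) + 0 * pderiv (pderiv f (j1p i)) (j2p hn i') (proj P))
   + 0 * (ap i' * pderiv (pderiv f (j2p hn i)) (j1p i') (proj P) + 0 * pderiv (pderiv f (j2p hn i)) (j2p hn i') (proj P))).
Proof. move=> hP hf; exact (comp_d2 (@open_ball _ P0 r) (@open_ball _ (proj P0) r) proj_hUV proj_hLs (j12p hn) i i' hP hf). Qed.
End ProjW.

Section LmW.
Variables (s0 : R) (q0 : RSTpt n) (m : RI n -> R) (r : R).
Hypothesis hr : 0 < r.
Notation L := (Lm s0 q0 m).
Notation rr := (r / (Mb m + 1)).
Lemma Lm_hUV : forall q, ball q0 rr q -> ball (L q0) r (L q).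
Proof. move=> q hq; exact: Lm_ball. Qed.
Lemma Lm_hLc : forall (q : RSTpt n) e, 0 < e -> exists d, 0 < d /\ forall q', ball q d q' -> ball (L q) e (L q').
Proof.
move=> q e he; exists (e / (Mb m + 1)); split; last by move=> q'; exact: Lm_ball.
have := Mb_ge0 m; move=> ?; apply: Rdiv_lt_0_compat; lra.
Qed.
Lemma Lm_hLs : forall i (q : RSTpt n) h, L (upd q i (q i + h)) =
  upd (upd (L q) (j1L i) (L q (j1L i) + (fun _ => 1) i * h)) (j2L hn i) (L q (j2L hn i) + bL m i * h).
Proof. exact: Lm_shape. Qed.

Lemma Ck_Lm k f : Ck k (ball (L q0) r) f -> Ck k (ball q0 rr) (fun q => f (L q)).
Proof. exact (Ck_comp (@open_ball _ q0 rr) (@open_ball _ (L q0) r) Lm_hUV Lm_hLc Lm_hLs (j12L hn) (k:=k) (f:=f)). Qed.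

Lemma deriv_Lm k f i q : ball q0 rr q -> Ck k.+1 (ball (L q0) r) f ->
  has_pderiv (fun q => f (L q)) i q (1 * pderiv f (j1L i) (L q) + bL m i * pderiv f (j2L hn i) (L q)).
Proof. move=> hq hf; exact (comp_deriv (@open_ball _ (L q0) r) Lm_hUV Lm_hLs (j12L hn) i hq hf). Qed.

Lemma pderiv_Lm k f i q : ball q0 rr q -> Ck k.+1 (ball (L q0) r) f ->
  pderiv (fun q => f (L q)) i q = 1 * pderiv f (j1L i) (L q) + bL m i * pderiv f (j2L hn i) (L q).
Proof. move=> hq hf; exact (pderiv_comp (@open_ball _ (L q0) r) Lm_hUV Lm_hLs (j12L hn) i hq hf). Qed.

Lemma d2_Lm k f i i' q : ball q0 rr q -> Ck k.+2 (ball (L q0) r) f ->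
  has_pderiv (pderiv (fun q => f (L q)) i) i' q
    (1 * (1 * pderiv (pderiv f (j1L i)) (j1L i') (L q) + bL m i' * pderiv (pderiv f (j1L i)) (j2L hn i') (L q))
   + bL m i * (1 * pderiv (pderiv f (j2L hn i)) (j1L i') (L q) + bL m i' * pderiv (pderiv f (j2L hn i)) (j2L hn i') (L q))).
Proof. move=> hq hf; exact (comp_d2 (@open_ball _ q0 rr) (@open_ball _ (L q0) r) Lm_hUV Lm_hLs (j12L hn) i i' hq hf). Qed.
End LmW.
End Wrappers.
Section Neg.
Variable n : nat.
Lemma LeviH_neg (F : STpt n -> R) P r : 0 < r -> Ck 2 (ball P r) F ->
  LeviH (fun Q => -1 * F Q) P = - LeviH F P.
Proof.
move=> hr hF2.
have hc := ball_center P hr.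
have hF : forall c c', has_pderiv (pderiv F (Some c')) (Some c) P (pderiv (pderiv F (Some c')) (Some c) P).
  move=> c c'; exact (Ck1_pderiv (Some c) hc (Ck_pderiv (Some c') hF2)).
have hd : forall i Q, ball P r Q -> pderiv (fun Q => -1 * F Q) i Q = -1 * pderiv F i Q.
  move=> i Q hQ; apply: pderiv_eq; apply: has_pderiv_scal; exact (Ck1_pderiv i hQ hF2).
have hG : forall c c', has_pderiv (pderiv (fun Q => -1 * F Q) (Some c')) (Some c) P
     (-1 * pderiv (pderiv F (Some c')) (Some c) P).
  move=> c c'.
  apply: (has_pderiv_open (@open_ball _ P r) hc (f := fun Q => -1 * pderiv F (Some c') Q)).
    move=> Q hQ; symmetry; exact: hd.
  exact: has_pderiv_scal (hF c c').
rewrite (LeviH_D hG) (LeviH_D hF) -LeviD_opp.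
have -> : (fun c => pderiv (fun Q => -1 * F Q) (Some c) P) = (fun c => - pderiv F (Some c) P).
  apply: functional_extensionality => c; rewrite hd //; ring.
have -> // : (fun c c' => -1 * pderiv (pderiv F (Some c')) (Some c) P) = (fun c c' => - pderiv (pderiv F (Some c')) (Some c) P).
apply: functional_extensionality => c; apply: functional_extensionality => c'; ring.
Qed.
End Neg.
Section Dir1.
Variable n : nat.
Hypothesis hn : (2 <= n)%N.
Variables (D : (RI n -> R) -> Prop) (u : RSTpt n -> R).

Lemma dir1 :
  cont_on (fun Q : RSTpt n => D (rspatial Q) /\ 0 < Q None) u ->
  weak_sol_H (fun P : STpt n => D (rspatial (proj P)) /\ 0 < P None) (fun P => yn P - u (proj P)) ->
  weak_sol_H0 (fun Q : RSTpt n => D (rspatial Q) /\ 0 < Q None) u.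
Proof.
move=> hu [hv Hv]; split => // phi Q0 hQ0 [r [hr hphi]].
set P0 := Defs.lift Q0 0.
have pP0 : proj P0 = Q0 := proj_lift Q0 0.
have hP0 : D (rspatial (proj P0)) /\ 0 < P0 None by rewrite pP0.
set F := fun P : STpt n => phi (proj P) + -1 * P (Some (yc hn)).
have hphi' : forall k, Ck k (ball (proj P0) r) phi by rewrite pP0.
have hFk : forall k, Ck k (ball P0 r) F.
  move=> k; apply: Ck_add (@open_ball _ P0 r) _ _; first exact: Ck_proj.
  apply: Ck_scal (@open_ball _ P0 r) _; exact: Ck_coord.
set Phi := fun P => -1 * F P.
have hPhik : forall k, Ck k (ball P0 r) Phi by move=> k; apply: Ck_scal (@open_ball _ P0 r) _.
have hsm : smooth_near Phi P0 by exists r.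
have [HM Hm] := Hv Phi P0 hP0 hsm.
have hc := ball_center P0 hr.
have dF : forall i, has_pderiv F i P0 ((ap i * pderiv phi (j1p i) (proj P0) + (fun _ => 0) i * pderiv phi (j2p hn i) (proj P0))
     + -1 * (if Some (yc hn) == i then 1 else 0)).
  move=> i; apply: has_pderiv_add; first exact (deriv_proj hn (k := 0) i hc (hphi' 1%nat)).
  apply: has_pderiv_scal; exact: has_pderiv_coord.
have dPhi : forall i, pderiv Phi i P0 = -1 * pderiv F i P0.
  move=> i; apply: pderiv_eq; apply: has_pderiv_scal; exact: (pderiv_spec (ex_intro _ _ (dF i))).
have dFN : pderiv F None P0 = pderiv phi None Q0.
  rewrite (pderiv_eq (dF None)) /= pP0 Rmult_1_l Rmult_0_l Rmult_0_r !Rplus_0_r //.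
have dFy : pderiv F (Some (yc hn)) P0 = -1.
  rewrite (pderiv_eq (dF _)) /ap insub_yc eqxx /=; ring.
have eL : LeviH0 phi Q0 = LeviH F P0.
  rewrite /LeviH0 -/P0; have -> // : (fun P => phi (proj P) - yn P) = F.
  apply: functional_extensionality => P; rewrite /F yn_eq; ring.
have eLP : LeviH Phi P0 = - LeviH F P0 := LeviH_neg hr (hFk 2%nat).
have hg2 : grad2 Phi P0 <> 0.
  apply (grad2_pos (hn:=hn)); rewrite dPhi dFy; lra.
have edt : dt Phi P0 = - dt phi Q0.
  rewrite /dt dPhi dFN; ring.
have ev : forall P, (yn P - u (proj P)) - Phi P = phi (proj P) - u (proj P).
  move=> P; rewrite /Phi /F yn_eq; ring.
split.
- move=> [rho [hrho hmax]].
  have hmin : loc_min (fun P : STpt n => D (rspatial (proj P)) /\ 0 < P None)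
                (fun P => (yn P - u (proj P)) - Phi P) P0.
    exists rho; split=> // P hP hb; rewrite !ev.
    have := hmax (proj P) hP ltac:(rewrite -pP0; exact: proj_ball hb); rewrite pP0; lra.
  have [H1 _] := Hm hmin.
  have := H1 hg2; rewrite edt eLP -eL; lra.
- move=> [rho [hrho hmin]].
  have hmax : loc_max (fun P : STpt n => D (rspatial (proj P)) /\ 0 < P None)
                (fun P => (yn P - u (proj P)) - Phi P) P0.
    exists rho; split=> // P hP hb; rewrite !ev.
    have := hmin (proj P) hP ltac:(rewrite -pP0; exact: proj_ball hb); rewrite pP0; lra.
  have [H1 _] := HM hmax.
  have := H1 hg2; rewrite edt eLP -eL; lra.
Qed.
End Dir1.
Section Psi.
Variable n : nat.
Hypothesis hn : (2 <= n)%N.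
Variables (phi : STpt n -> R) (P0 : STpt n) (r : R) (M : R).
Hypothesis hr : 0 < r.
Hypothesis hphi : forall k, Ck k (ball P0 r) phi.
Hypothesis hpy : pderiv phi (Some (yc hn)) P0 = 1.

Definition d1p (c : CT n) : R := pderiv phi (Some c) P0.
Definition ell (c : CT n) : R := if c.1 then - d1p c else d1p c.
Definition mm (x : RI n) : R := ell (val x).
Definition q0p : RSTpt n := proj P0.
Definition s0p : R := yn P0.
Definition Lp := Lm s0p q0p mm.
Definition gp (P : STpt n) : R := P (Some (yc hn)) + -1 * phi P + - M.
Definition psi (q : RSTpt n) : R := gp (Lp q).
Definition rp : R := r / (Mb mm + 1).

Lemma rp_pos : 0 < rp.
Proof. have := Mb_ge0 mm; rewrite /rp => ?; apply: Rdiv_lt_0_compat; lra. Qed.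

Lemma sumL_zero {T : Type} (s : seq T) : sumL s (fun _ => 0) = 0.
Proof. by elim: s => //= x s ->; ring. Qed.

Lemma Lp_q0 : Lp q0p = P0.
Proof.
rewrite /Lp /Lm.
have -> : Yf s0p q0p mm q0p = yn P0.
  rewrite /Yf (sumL_ext _ (G := fun _ => 0)); first by rewrite sumL_zero /s0p; ring.
  move=> c; ring.
exact: lift_proj.
Qed.

Lemma Ck_gp k : Ck k (ball P0 r) gp.
Proof.
apply: Ck_add (@open_ball _ P0 r) _ _; last exact: Ck_const.
apply: Ck_add (@open_ball _ P0 r) _ _; first exact: Ck_coord.
apply: Ck_scal (@open_ball _ P0 r) _; exact: hphi.
Qed.

Lemma Ck_gp' k : Ck k (ball (Lp q0p) r) gp.
Proof. rewrite Lp_q0; exact: Ck_gp. Qed.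

Lemma Ck_psi k : Ck k (ball q0p rp) psi.
Proof. exact: (Ck_Lm hn hr (Ck_gp' k)). Qed.

Lemma dgp i P : ball P0 r P -> has_pderiv gp i P
  (((if Some (yc hn) == i then 1 else 0) + -1 * pderiv phi i P) + 0).
Proof.
move=> hP; apply: has_pderiv_add; last exact: has_pderiv_const.
apply: has_pderiv_add; first exact: has_pderiv_coord.
apply: has_pderiv_scal; exact (Ck1_pderiv i hP (hphi 1%nat)).
Qed.

Lemma pgp i P : ball P0 r P -> pderiv gp i P = (if Some (yc hn) == i then 1 else 0) - pderiv phi i P.
Proof. move=> hP; rewrite (pderiv_eq (dgp i hP)); ring. Qed.

Lemma Dgp i j : pderiv (pderiv gp i) j P0 = - pderiv (pderiv phi i) j P0.
Proof.
have hc := ball_center P0 hr.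
apply: pderiv_eq.
apply: (has_pderiv_open (@open_ball _ P0 r) hc (f := fun P => (if Some (yc hn) == i then 1 else 0) + -1 * pderiv phi i P)).
  move=> P hP; rewrite pgp //; ring.
have -> : - pderiv (pderiv phi i) j P0 = 0 + -1 * pderiv (pderiv phi i) j P0 by ring.
apply: has_pderiv_add; first exact: has_pderiv_const.
apply: has_pderiv_scal; exact (Ck1_pderiv j hc (Ck_pderiv i (hphi 2%nat))).
Qed.

Lemma hc0 : ball q0p rp q0p.
Proof. exact: ball_center rp_pos. Qed.

Lemma dt_psi : dt psi q0p = - dt phi P0.
Proof.
rewrite /dt /psi.
have := pderiv_Lm hn hr (k := 0) None hc0 (Ck_gp' 1%nat).
rewrite -/Lp => ->; rewrite Lp_q0 pgp; last exact: ball_center.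
rewrite /= Rmult_0_l Rplus_0_r Rmult_1_l Rminus_0_l. reflexivity.
Qed.
End Psi.
Section Psi2.
Variable n : nat.
Hypothesis hn : (2 <= n)%N.
Variables (phi : STpt n -> R) (P0 : STpt n) (r : R) (M : R).
Hypothesis hr : 0 < r.
Hypothesis hphi : forall k, Ck k (ball P0 r) phi.
Hypothesis hpy : pderiv phi (Some (yc hn)) P0 = 1.

Notation psi := (psi hn phi P0 M).
Notation q0p := (q0p P0).
Notation rp := (rp phi P0 r).
Definition Qp : STpt n := Defs.lift q0p 0.
Definition Kn (P : STpt n) : R := psi (proj P) + -1 * P (Some (yc hn)).

Lemma proj_Qp : proj Qp = q0p.
Proof. exact: proj_lift. Qed.

Lemma Ck_psi' k : Ck k (ball (proj Qp) rp) psi.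
Proof. rewrite proj_Qp; exact: Ck_psi. Qed.

Lemma dKn i P : ball Qp rp P -> has_pderiv Kn i P
  ((ap i * pderiv psi (j1p i) (proj P) + (fun _ => 0) i * pderiv psi (j2p hn i) (proj P))
   + -1 * (if Some (yc hn) == i then 1 else 0)).
Proof.
move=> hP; apply: has_pderiv_add; first exact (deriv_proj hn (k := 0) i hP (Ck_psi' 1%nat)).
apply: has_pderiv_scal; exact: has_pderiv_coord.
Qed.

Lemma pKn i P : ball Qp rp P -> pderiv Kn i P =
  (ap i * pderiv psi (j1p i) (proj P) + 0 * pderiv psi (j2p hn i) (proj P))
   + -1 * (if Some (yc hn) == i then 1 else 0).
Proof. move=> hP; exact: pderiv_eq (dKn i hP). Qed.

Lemma d2Kn i i' : has_pderiv (pderiv Kn i) i' Qp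
    ((ap i * (ap i' * pderiv (pderiv psi (j1p i)) (j1p i') (proj Qp) + 0 * pderiv (pderiv psi (j1p i)) (j2p hn i') (proj Qp))
   + 0 * (ap i' * pderiv (pderiv psi (j2p hn i)) (j1p i') (proj Qp) + 0 * pderiv (pderiv psi (j2p hn i)) (j2p hn i') (proj Qp)))
   + -1 * 0).
Proof.
have hrp := rp_pos phi P0 hr.
have hc := ball_center Qp hrp.
apply: (has_pderiv_open (@open_ball _ Qp rp) hc
   (f := fun P => pderiv (fun P => psi (proj P)) i P + -1 * (if Some (yc hn) == i then 1 else 0))).
  move=> P hP; rewrite (pderiv_eq (dKn i hP)).
  by rewrite (pderiv_eq (deriv_proj hn (k := 0) i hP (Ck_psi' 1%nat))).
apply: has_pderiv_add; first exact (d2_proj hn (k := 0) i i' hc (Ck_psi' 2%nat)).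
apply: has_pderiv_scal; exact: has_pderiv_const.
Qed.

Notation Dp c c' := (pderiv (pderiv phi (Some c)) (Some c') P0).
Notation d1 := (d1p phi P0).
Notation el := (ell phi P0).

Lemma hc0' : ball q0p rp q0p.
Proof. exact: (hc0 phi P0 hr). Qed.

Lemma yc_neq (x : RI n) : (Some (yc hn) == Some (val x) :> option (CT n)) = false.
Proof. by rewrite eq_sym some_val_neq. Qed.

Lemma yc_neq' (x : RI n) : (Some (yc hn) == Some (sval x) :> option (CT n)) = false.
Proof. exact: yc_neq. Qed.

Lemma insub_sval (x : RI n) : (insub (sval x) : option (RI n)) = Some x.
Proof. exact: valK. Qed.

Lemma psi1 (x : RI n) : pderiv psi (Some x) q0p = - d1 (val x).
Proof.
have := pderiv_Lm hn hr (k := 0) (Some x) hc0' (Ck_gp' hn M hphi 1%nat).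
rewrite -/(Lp phi P0) (Lp_q0 hn) => ->.
rewrite !(pgp hn M hphi) ?(ball_center P0 hr) //= /j2L.
rewrite hpy /d1p.
case: ifP => [/eqP [e]|_]; first by move: (val_neq_yc hn x) => /eqP; case; exact (esym e).
case: ifP => [_|/eqP H]; last by case: H.
rewrite Rminus_0_l Rminus_diag Rmult_0_r Rplus_0_r Rmult_1_l //.
all: exact (ball_center P0 hr).
Qed.

Lemma d1K c : pderiv Kn (Some c) Qp = - d1 c.
Proof.
have hrp := rp_pos phi P0 hr.
rewrite pKn; last exact (ball_center Qp hrp).
rewrite proj_Qp.
case: (CT_cases hn c) => [->|[x ->]].
- rewrite /ap insub_yc eqxx /d1p hpy /=.
  rewrite !Rmult_0_l; lra.
- rewrite /ap /= ?insub_val ?insub_sval /= psi1.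
  case: ifP => [/eqP [e]|_]; first by move: (val_neq_yc hn x) => /eqP; case; exact (esym e).
  rewrite Rmult_1_l Rmult_0_l Rmult_0_r !Rplus_0_r; reflexivity.
Qed.

Lemma D2psi (x x' : RI n) : pderiv (pderiv psi (Some x)) (Some x') q0p =
  - (Dp (val x) (val x') + mm phi P0 x' * Dp (val x) (yc hn) + mm phi P0 x * Dp (yc hn) (val x')
     + mm phi P0 x * mm phi P0 x' * Dp (yc hn) (yc hn)).
Proof.
have := d2_Lm hn hr (k := 0) (Some x) (Some x') hc0' (Ck_gp' hn M hphi 2%nat).
rewrite -/(Lp phi P0) (Lp_q0 hn) => /pderiv_eq ->.
rewrite /= !(Dgp hn M hr hphi).
have H : forall a b c d e f : R, 1 * (1 * - a + e * - b) + f * (1 * - c + e * - d) = - (a + e * b + f * c + f * e * d)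
  by move=> *; ring.
apply: H.
Qed.

Lemma ell_yc : el (yc hn) = -1.
Proof. by rewrite /ell /= /d1p hpy. Qed.

Lemma j1p_val (x : RI n) : j1p (Some (val x)) = Some x.
Proof. exact: valK. Qed.

Lemma hp_eq {T : eqType} (f : (T -> R) -> R) i p l l' : has_pderiv f i p l -> l = l' -> has_pderiv f i p l'.
Proof. by move=> h <-. Qed.

Lemma d2K c c' : has_pderiv (pderiv Kn (Some c')) (Some c) Qp
  (- (Dp c' c + el c * Dp c' (yc hn) + Dp (yc hn) c * el c' + Dp (yc hn) (yc hn) * el c * el c')).
Proof.
apply: (hp_eq (d2Kn (Some c') (Some c))); rewrite proj_Qp.
case: (CT_cases hn c') => [->|[x' ->]].
- rewrite ell_yc {1 2}/ap insub_yc.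
  have H : forall X Y D1 D2 E : R, 0 * X + 0 * Y + -1 * 0 = -(D1 + E * D2 + D1 * -1 + D2 * E * -1) by move=> *; ring.
  apply: H.
case: (CT_cases hn c) => [->|[x ->]].
- rewrite ell_yc /ap insub_yc ?insub_val ?insub_sval /=.
  have H : forall X Y W A B E : R, 1 * (0 * X + 0 * Y) + 0 * W + -1 * 0 = -(A + -1 * A + B * E + B * -1 * E) by move=> *; ring.
  apply: H.
rewrite /ap ?insub_val ?insub_sval !j1p_val D2psi /mm.
have H : forall A B C D E F Z W : R, 1 * (1 * - (A + E * B + F * C + F * E * D) + 0 * Z) + 0 * W + -1 * 0
   = - (A + E * B + C * F + D * E * F) by move=> *; ring.
apply: H.
Qed.

Lemma Levi_psi : LeviH0 psi q0p = - LeviH phi P0.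
Proof.
have e0 : LeviH0 psi q0p = LeviH Kn Qp.
  rewrite /LeviH0 -/Qp; have -> // : (fun P => psi (proj P) - yn P) = Kn.
  apply: functional_extensionality => P; rewrite /Kn (yn_eq hn); ring.
rewrite e0 (LeviH_D d2K).
have hphi2 : forall c c', has_pderiv (pderiv phi (Some c')) (Some c) P0 (Dp c' c).
  move=> c c'; exact (Ck1_pderiv (Some c) (ball_center P0 hr) (Ck_pderiv (Some c') (hphi 2%nat))).
rewrite (LeviH_D hphi2).
have -> : (fun c => pderiv Kn (Some c) Qp) = (fun c => - d1 c).
  apply: functional_extensionality => c; exact: d1K.
have hg : sumR (fun a => Cnorm2 (ZD d1 a)) <> 0.
  apply (grad2_pos (hn := hn) (f := phi) (P := P0)); rewrite hpy; lra.
have Hopp := LeviD_opp d1 (fun c c' => Dp c' c + el c * Dp c' (yc hn) + Dp (yc hn) c * el c' + Dp (yc hn) (yc hn) * el c * el c').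
have Hhard := @LeviD_hard n d1 (fun c c' => Dp c' c) el (fun c' => Dp c' (yc hn))
   (fun c => Dp (yc hn) c) (Dp (yc hn) (yc hn)) (fun a => erefl) (fun a => erefl) hg.
exact (etrans Hopp (f_equal Ropp Hhard)).
Qed.
End Psi2.
Section Dir2.
Variable n : nat.
Hypothesis hn : (2 <= n)%N.
Variables (D : (RI n -> R) -> Prop) (u : RSTpt n -> R).
Notation Om := (fun P : STpt n => D (rspatial (proj P)) /\ 0 < P None).
Notation Om0 := (fun Q : RSTpt n => D (rspatial Q) /\ 0 < Q None).
Notation v := (fun P : STpt n => yn P - u (proj P)).

Lemma cont_v : cont_on Om0 u -> cont_on Om v.
Proof.
move=> hu P hP e he.
have [d [hd H]] := hu (proj P) hP (e/2) ltac:(lra).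
exists (Rmin d (e/2)); split; first by apply: Rmin_glb_lt => //; lra.
move=> P' hP' hb.
have h1 := H (proj P') hP' (proj_ball (ball_mono (Rmin_l _ _) hb)).
have h2 := ball_mono (Rmin_r _ _) hb (Some (yc hn)).
rewrite !(yn_eq hn).
have -> : P' (Some (yc hn)) - u (proj P') - (P (Some (yc hn)) - u (proj P))
   = (P' (Some (yc hn)) - P (Some (yc hn))) - (u (proj P') - u (proj P)) by ring.
eapply Rle_lt_trans; first apply: Rabs_triang.
rewrite Rabs_Ropp; lra.
Qed.

Lemma py_gen (phi : STpt n -> R) P0 l (sg : R) rho : 0 < rho -> Om P0 ->
  has_pderiv phi (Some (yc hn)) P0 l ->
  (forall P, Om P -> ball P0 rho P -> sg * (v P - phi P) <= sg * (v P0 - phi P0)) -> sg <> 0 -> l = 1.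
Proof.
move=> hrho hP0 hl hm hsg.
set s0 := P0 (Some (yc hn)).
have hd : derivable_pt_lim (fun s => sg * (s - u (proj P0) - phi (upd P0 (Some (yc hn)) s))) s0 (sg * (1 - 0 - l)).
  apply: derivable_pt_lim_scal.
  apply: derivable_pt_lim_minus; last exact: hl.
  apply: derivable_pt_lim_minus; [exact: derivable_pt_lim_id| exact: derivable_pt_lim_const].
have := deriv_max_zero hrho hd.
have e0 : upd P0 (Some (yc hn)) s0 = P0 by rewrite /s0 upd_id.
move=> H; have : sg * (1 - 0 - l) = 0.
  apply: H => y hy.
  have hb : ball P0 rho (upd P0 (Some (yc hn)) y) by apply: ball_upd.
  have hO : Om (upd P0 (Some (yc hn)) y) by rewrite /= proj_upd_yc.
  have hm' := hm _ hO hb; rewrite /= proj_upd_yc yn_upd_yc (yn_eq hn) -/s0 in hm'.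
  rewrite /= e0; exact hm'.
move=> /Rmult_integral [//|]; lra.
Qed.

Lemma dir2 : cont_on Om0 u -> weak_sol_H0 Om0 u -> weak_sol_H Om v.
Proof.
move=> hu [_ Hu]; split; first exact: cont_v.
move=> phi P0 hP0 [r [hr hphi]].
have hl := Ck1_pderiv (Some (yc hn)) (ball_center P0 hr) (hphi 1%nat).
set M := (yn P0 - u (proj P0)) - phi P0.
set psi0 := psi hn phi P0 M.
have hsm : smooth_near psi0 (q0p P0).
  exists (rp phi P0 r); split; [exact: rp_pos| exact: (Ck_psi hn M hr hphi)].
have hq0 : Om0 (q0p P0) by exact: hP0.
have [HM0 Hm0] := Hu psi0 (q0p P0) hq0 hsm.
have hMb := Mb_ge0 (mm phi P0).
have hLp : forall rho Q, 0 < rho -> ball (q0p P0) (rho / (Mb (mm phi P0) + 1)) Q -> ball P0 rho (Lp phi P0 Q).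
  move=> rho Q hrho hb; rewrite -{1}(Lp_q0 hn phi P0); exact: Lm_ball hb.
have eproj : forall Q, proj (Lp phi P0 Q) = Q by move=> Q; exact: proj_lift.
have epsi : forall Q, psi0 Q = yn (Lp phi P0 Q) - phi (Lp phi P0 Q) - M.
  move=> Q; rewrite /psi0 /psi /gp (yn_eq hn); ring.
have epsi0 : psi0 (q0p P0) = u (q0p P0).
  rewrite epsi (Lp_q0 hn) /M /q0p; ring.
have hpos : forall rho, 0 < rho -> 0 < rho / (Mb (mm phi P0) + 1).
  move=> rho hrho; apply: Rdiv_lt_0_compat; lra.
have hgrad : pderiv phi (Some (yc hn)) P0 = 1 -> grad2 phi P0 <> 0.
  move=> hpy; apply (grad2_pos (hn := hn)); rewrite hpy; lra.
split.
- move=> [rho [hrho hmax]].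
  have hpy : pderiv phi (Some (yc hn)) P0 = 1.
    have hm1 : forall P, Om P -> ball P0 rho P -> 1 * (v P - phi P) <= 1 * (v P0 - phi P0).
      move=> P hP hb; have := hmax P hP hb; lra.
    exact: (py_gen hrho hP0 hl hm1 ltac:(move=> e; lra)).
  have hmin : loc_min Om0 (fun Q => u Q - psi0 Q) (q0p P0).
    exists (rho / (Mb (mm phi P0) + 1)); split; first exact: hpos.
    move=> Q hQ hb.
    have hO : Om (Lp phi P0 Q) by rewrite /= eproj.
    have := hmax (Lp phi P0 Q) hO (hLp rho Q hrho hb).
    rewrite /= eproj epsi0 epsi /M; lra.
  have H := Hm0 hmin.
  rewrite (dt_psi hn M hr hphi) (Levi_psi M hr hphi hpy) in H.
  split; first by move=> _; lra.
  by move=> h0; exfalso; exact: (hgrad hpy h0).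
- move=> [rho [hrho hmin]].
  have hpy : pderiv phi (Some (yc hn)) P0 = 1.
    have hm1 : forall P, Om P -> ball P0 rho P -> -1 * (v P - phi P) <= -1 * (v P0 - phi P0).
      move=> P hP hb; have := hmin P hP hb; lra.
    exact: (py_gen hrho hP0 hl hm1 ltac:(move=> e; lra)).
  have hmax : loc_max Om0 (fun Q => u Q - psi0 Q) (q0p P0).
    exists (rho / (Mb (mm phi P0) + 1)); split; first exact: hpos.
    move=> Q hQ hb.
    have hO : Om (Lp phi P0 Q) by rewrite /= eproj.
    have := hmin (Lp phi P0 Q) hO (hLp rho Q hrho hb).
    rewrite /= eproj epsi0 epsi /M; lra.
  have H := HM0 hmax.
  rewrite (dt_psi hn M hr hphi) (Levi_psi M hr hphi hpy) in H.
  split; first by move=> _; lra.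
  by move=> h0; exfalso; exact: (hgrad hpy h0).
Qed.
End Dir2.
Unset Implicit Arguments.

Theorem lemma3p2 (n : nat) (hn : (2 <= n)%N)
  (D : (RI n -> R) -> Prop) (u : RSTpt n -> R) :
  domain D ->
  cont_on (fun Q : RSTpt n => D (rspatial Q) /\ 0 < Q None) u ->
  (weak_sol_H (fun P : STpt n => D (rspatial (proj P)) /\ 0 < P None)
               (fun P => yn P - u (proj P))
   <->
   weak_sol_H0 (fun Q : RSTpt n => D (rspatial Q) /\ 0 < Q None) u).
Proof.
move=> _ hu; split.
- exact: (dir1 hn hu).
- exact: (dir2 hn hu).
Qed.
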